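(* Let $d=2$ and use polar coordinates $(r,\phi)$, $x^1=r\cos\phi$, $x^2=r\sin\phi$. Let $\Lambda\subset\mathbb{R}^2$ be bounded, the closure of an open connected set with piecewise smooth boundary, not containing the origin, and contained in the annulus $\{x:0<R_1<|x|<R_2<\infty\}$. Let $U$ be a smooth function on $(0,\infty)$ and $F(x)=-U'(|x|)\frac{x}{|x|}$. For $x\in\Lambda$ let $y(t,x)$ solve $\frac{d^2y}{dt^2}=F(y)$, $y(0,x)=x$, with initial velocity such that, writing $r(t,x),\phi(t,x)$ for the polar coordinates of $y(t,x)$, $$\frac{dr(0,x)}{dt}=g(|x|)>0,\qquad \frac{d\phi(0,x)}{dt}=h(|x|)$$ for some functions $g,h$ of $|x|$ only. Let $M(r)=r^2h(r)$ and assume that for all $r_2\ge r_1>R_1$, $$-U'(r_2)+\frac{M^2(r_1)}{r_2^3}\ge0.$$ Define $E_0(r)=\frac12g^2(r)+U(r)+\frac12r^2h^2(r)$ and $V(z,r)=U(z)+\frac{r^4h^2(r)}{2z^2}$. If for all $R_1<r_1<R_2$ and all $r_2>r_1$ $$\int_{r_1}^{r_2}\frac{d}{dr_1}\frac{1}{\sqrt{2(E_0(r_1)-V(z,r_1))}}\,dz<\frac{1}{g(r_1)},$$ then there are no collisions: $y(t,x_1)\ne y(t,x_2)$ for all $t\ge0$ and all $x_1\ne x_2$ in $\Lambda$.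
   Context: Each point of $\Lambda$ is a non-interacting unit-mass point particle moving in the central field $F$. *)

(* Defs.v *)
From Stdlib Require Import Reals List.
From Coquelicot Require Import Coquelicot.
Open Scope R_scope.

Definition pt := (R * R)%type.

Definition enorm (p : pt) : R := sqrt (fst p ^ 2 + snd p ^ 2).

Definition Ffield (U : R -> R) (p : pt) : pt :=
  (- Derive U (enorm p) * fst p / enorm p, - Derive U (enorm p) * snd p / enorm p).

Definition smooth_pos (U : R -> R) : Prop :=
  forall (n : nat) (r : R), 0 < r -> ex_derive_n U n r.

Definition smooth_curve (c : R -> pt) : Prop :=
  forall (n : nat) (t : R),
    ex_derive_n (fun s => fst (c s)) n t /\ ex_derive_n (fun s => snd (c s)) n t.

Definition closure2 (S : pt -> Prop) (x : pt) : Prop :=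
  forall eps : R, 0 < eps -> exists y, S y /\ enorm (fst y - fst x, snd y - snd x) < eps.

Definition boundary2 (S : pt -> Prop) (x : pt) : Prop :=
  closure2 S x /\ closure2 (fun y => ~ S y) x.

Definition connected2 (S : pt -> Prop) : Prop :=
  ~ exists A B : pt -> Prop, open A /\ open B /\
      (forall x, S x -> A x \/ B x) /\
      (exists x, S x /\ A x) /\ (exists x, S x /\ B x) /\
      (forall x, ~ (S x /\ A x /\ B x)).

Definition bounded2 (S : pt -> Prop) : Prop :=
  exists C : R, forall x, S x -> enorm x <= C.

Definition piecewise_smooth_boundary (S : pt -> Prop) : Prop :=
  exists cs : list (R -> pt),
    (forall c, In c cs -> smooth_curve c) /\
    (forall x, boundary2 S x <-> exists c, In c cs /\ exists s, 0 <= s <= 1 /\ c s = x).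

Definition admissible_domain (L : pt -> Prop) : Prop :=
  (exists O : pt -> Prop, open O /\ connected2 O /\ (forall x, L x <-> closure2 O x)) /\
  piecewise_smooth_boundary L.

(* y solves y'' = F(y) on [0, +oo) with y(0) = x and y'(0) = v(0);
   the derivatives on (0,+oo) are two-sided, and y, y' are right-continuous at 0 *)
Definition solves_newton (U : R -> R) (y v : R -> pt) (x : pt) : Prop :=
  y 0 = x /\
  (forall t, 0 <= t -> y t <> (0, 0)) /\
  (forall t, 0 < t -> is_derive y t (v t) /\ is_derive v t (Ffield U (y t))) /\
  filterlim y (at_right 0) (locally (y 0)) /\
  filterlim v (at_right 0) (locally (v 0)).

(* polar coordinates derivatives at a point p with velocity w:
   dr/dt = (p . w)/|p|,  dphi/dt = (p^1 w^2 - p^2 w^1)/|p|^2 *)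
Definition radial_vel (p w : pt) : R := (fst p * fst w + snd p * snd w) / enorm p.
Definition angular_vel (p w : pt) : R := (fst p * snd w - snd p * fst w) / (enorm p ^ 2).

Definition Mfun (h : R -> R) (r : R) : R := r ^ 2 * h r.
Definition E0 (U g h : R -> R) (r : R) : R := / 2 * g r ^ 2 + U r + / 2 * r ^ 2 * h r ^ 2.
Definition Vfun (U h : R -> R) (z r : R) : R := U z + r ^ 4 * h r ^ 2 / (2 * z ^ 2).

Definition integrand (U g h : R -> R) (z r1 : R) : R :=
  / sqrt (2 * (E0 U g h r1 - Vfun U h z r1)).

(* Main.v *)
Require Import Defs.
From Stdlib Require Import Reals List Lra Classical.
From Coquelicot Require Import Coquelicot.
Open Scope R_scope.

Lemma loc_pos (x : R) : 0 < x -> locally x (fun y => 0 < y).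
Proof. intros H. apply (open_gt 0 x H). Qed.

Lemma MVT0 (f df : R -> R) :
  (forall t, 0 < t -> is_derive f t (df t)) ->
  filterlim f (at_right 0) (locally (f 0)) ->
  forall a b, 0 <= a < b -> exists c, 0 < c /\ a <= c <= b /\ f b - f a = df c * (b - a).
Proof.
  intros Hd Hc a b Hab.
  destruct (C0_extension_left f (f 0) 0 (b+1)) as [g [Hg1 [Hg2 Hg3]]].
  - lra.
  - intros c Hc'. apply (@ex_derive_continuous R_AbsRing R_NormedModule f c). eexists. apply Hd. lra.
  - exact Hc.
  - assert (Hfg : forall t, 0 <= t -> g t = f t).
    { intros t Ht. destruct (Req_dec t 0) as [->|Hn]. exact Hg3. apply Hg2. lra. }
    set (df2 := fun t => if Rlt_dec 0 t then df t else df b).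
    destruct (MVT_gen g a b df2) as [c [Hc1 Hc2]].
    + intros x Hx. rewrite Rmin_left in Hx by lra. rewrite Rmax_right in Hx by lra.
      unfold df2. destruct (Rlt_dec 0 x); [|lra].
      apply is_derive_ext_loc with f.
      * apply filter_imp with (2 := loc_pos x ltac:(lra)). intros y Hy. symmetry. apply Hfg. lra.
      * apply Hd. lra.
    + intros x Hx. rewrite Rmin_left in Hx by lra. rewrite Rmax_right in Hx by lra.
      apply continuity_pt_filterlim. apply Hg1. lra.
    + rewrite Rmin_left in Hc1 by lra. rewrite Rmax_right in Hc1 by lra.
      rewrite !Hfg in Hc2 by lra.
      unfold df2 in Hc2. destruct (Rlt_dec 0 c).
      * exists c. split; auto.
      * exists b. split; [lra|split; [lra|auto]].
Qed.

Lemma const0 (f df : R -> R) :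
  (forall t, 0 < t -> is_derive f t (df t)) ->
  (forall t, 0 < t -> df t = 0) ->
  filterlim f (at_right 0) (locally (f 0)) ->
  forall t, 0 <= t -> f t = f 0.
Proof.
  intros Hd H0 Hc t Ht. destruct (Req_dec t 0) as [->|Hn]; auto.
  destruct (MVT0 f df Hd Hc 0 t ltac:(lra)) as [c [Hc1 [_ Hc2]]].
  rewrite H0 in Hc2 by auto. lra.
Qed.

Lemma incr0 (f df : R -> R) :
  (forall t, 0 < t -> is_derive f t (df t)) ->
  (forall t, 0 < t -> 0 < df t) ->
  filterlim f (at_right 0) (locally (f 0)) ->
  forall a b, 0 <= a < b -> f a < f b.
Proof.
  intros Hd H0 Hc a b Hab.
  destruct (MVT0 f df Hd Hc a b Hab) as [c [Hc1 [_ Hc2]]].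
  specialize (H0 c Hc1). nra.
Qed.

Lemma deq (f : R -> R) (x l l' : R) : is_derive f x l -> l = l' -> is_derive f x l'.
Proof. intros H ->; exact H. Qed.
Lemma dmul (f g : R -> R) x df dg : is_derive f x df -> is_derive g x dg ->
  is_derive (fun t => f t * g t) x (df * g x + f x * dg).
Proof. intros. apply (is_derive_mult f g x df dg); auto. intros; apply Rmult_comm. Qed.
Lemma dadd (f g : R -> R) x df dg : is_derive f x df -> is_derive g x dg ->
  is_derive (fun t => f t + g t) x (df + dg).
Proof. intros. apply (is_derive_plus f g x df dg); auto. Qed.
Lemma dsub (f g : R -> R) x df dg : is_derive f x df -> is_derive g x dg ->
  is_derive (fun t => f t - g t) x (df - dg).
Proof. intros. apply (is_derive_minus f g x df dg); auto. Qed.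
Lemma dcomp (f g : R -> R) x df dg : is_derive f (g x) df -> is_derive g x dg ->
  is_derive (fun t => f (g t)) x (dg * df).
Proof. intros. apply (is_derive_comp f g x df dg); auto. Qed.
Lemma dconst (c x : R) : is_derive (fun _ => c) x 0.
Proof. apply (is_derive_const c x). Qed.
Lemma did (x : R) : is_derive (fun t => t) x 1.
Proof. apply (is_derive_id x). Qed.

Lemma dfst (Y : R -> R * R) t w : is_derive Y t w -> is_derive (fun s => fst (Y s)) t (fst w).
Proof.
  intros H. unfold is_derive in *.
  eapply filterdiff_ext_lin.
  - apply (filterdiff_comp' Y fst t _ (fun p => fst p) H). apply filterdiff_linear. apply is_linear_fst.
  - intros y. simpl. reflexivity.
Qed.
Lemma dsnd (Y : R -> R * R) t w : is_derive Y t w -> is_derive (fun s => snd (Y s)) t (snd w).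
Proof.
  intros H. unfold is_derive in *.
  eapply filterdiff_ext_lin.
  - apply (filterdiff_comp' Y snd t _ (fun p => snd p) H). apply filterdiff_linear. apply is_linear_snd.
  - intros y. simpl. reflexivity.
Qed.

Lemma lfst {T} (F : (T -> Prop) -> Prop) (Y : T -> R * R) p : Filter F ->
  filterlim Y F (locally p) -> filterlim (fun s => fst (Y s)) F (locally (fst p)).
Proof.
  intros FF H. eapply filterlim_comp. exact H. destruct p as [p1 p2]. apply (continuous_fst p1 p2).
Qed.
Lemma lsnd {T} (F : (T -> Prop) -> Prop) (Y : T -> R * R) p : Filter F ->
  filterlim Y F (locally p) -> filterlim (fun s => snd (Y s)) F (locally (snd p)).
Proof.
  intros FF H. eapply filterlim_comp. exact H. destruct p as [p1 p2]. apply (continuous_snd p1 p2).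
Qed.
Lemma lmul {T} (F : (T -> Prop) -> Prop) (f g : T -> R) a b : Filter F ->
  filterlim f F (locally a) -> filterlim g F (locally b) ->
  filterlim (fun s => f s * g s) F (locally (a * b)).
Proof.
  intros FF H1 H2. eapply filterlim_comp_2; [exact H1|exact H2|]. apply (filterlim_mult a b).
Qed.
Lemma ladd {T} (F : (T -> Prop) -> Prop) (f g : T -> R) a b : Filter F ->
  filterlim f F (locally a) -> filterlim g F (locally b) ->
  filterlim (fun s => f s + g s) F (locally (a + b)).
Proof.
  intros FF H1 H2. eapply filterlim_comp_2; [exact H1|exact H2|]. apply (filterlim_plus a b).
Qed.
Lemma lcomp {T} (F : (T -> Prop) -> Prop) (f : T -> R) (h : R -> R) a : Filter F ->
  filterlim f F (locally a) -> continuous h a ->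
  filterlim (fun s => h (f s)) F (locally (h a)).
Proof. intros FF H1 H2. eapply filterlim_comp; eauto. Qed.
Lemma lopp {T} (F : (T -> Prop) -> Prop) (f : T -> R) a : Filter F ->
  filterlim f F (locally a) -> filterlim (fun s => - f s) F (locally (- a)).
Proof. intros FF H. apply (lcomp F f Ropp a FF H). apply (@ex_derive_continuous R_AbsRing R_NormedModule Ropp a). auto_derive; auto. Qed.
Lemma lsub {T} (F : (T -> Prop) -> Prop) (f g : T -> R) a b : Filter F ->
  filterlim f F (locally a) -> filterlim g F (locally b) ->
  filterlim (fun s => f s - g s) F (locally (a - b)).
Proof. intros FF H1 H2. apply ladd; auto. apply lopp; auto. Qed.
Lemma lconst {T} (F : (T -> Prop) -> Prop) (c : R) : Filter F ->
  filterlim (fun _ => c) F (locally c).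
Proof. intros FF. apply filterlim_const. Qed.
Lemma lext {T} (F : (T -> Prop) -> Prop) (f g : T -> R) a b : Filter F ->
  (forall s, f s = g s) -> a = b -> filterlim f F (locally a) -> filterlim g F (locally b).
Proof. intros FF H -> Hl. eapply filterlim_ext; eauto. Qed.
Lemma lsq {T} (F : (T -> Prop) -> Prop) (f : T -> R) a : Filter F ->
  filterlim f F (locally a) -> filterlim (fun s => f s ^ 2) F (locally (a ^ 2)).
Proof. intros FF H. apply (lcomp F f (fun x => x ^ 2) a FF H).
  apply (@ex_derive_continuous R_AbsRing R_NormedModule (fun x => x ^ 2) a). auto_derive; auto. Qed.
Lemma at_right_filter (x : R) : Filter (at_right x).
Proof. apply at_right_proper_filter. Qed.
Global Hint Resolve at_right_filter : core.
Lemma dext (f g : R -> R) (x l : R) : (forall t, f t = g t) -> is_derive f x l -> is_derive g x l.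
Proof. intros H1 H2. apply (is_derive_ext f g x l H1 H2). Qed.

Lemma ball_R (m e y : R) : ball m e y <-> Rabs (y - m) < e.
Proof. unfold ball; simpl. unfold AbsRing_ball. unfold abs, minus, plus, opp; simpl. tauto. Qed.

Lemma cont_ed (f : R -> R) m : filterlim f (locally m) (locally (f m)) ->
  forall e, 0 < e -> exists d, 0 < d /\ forall u, Rabs (u - m) < d -> Rabs (f u - f m) < e.
Proof.
  intros H e He.
  destruct (proj1 (filterlim_locally f (f m)) H (mkposreal e He)) as [d Hd].
  exists d. split. apply cond_pos. intros u Hu. apply ball_R. apply Hd. apply ball_R. exact Hu.
Qed.

Lemma rc_ed (f : R -> R) l : filterlim f (at_right 0) (locally l) ->
  forall e, 0 < e -> exists d, 0 < d /\ forall u, 0 < u < d -> Rabs (f u - l) < e.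
Proof.
  intros H e He.
  destruct (proj1 (filterlim_locally f l) H (mkposreal e He)) as [d Hd].
  exists d. split. apply cond_pos. intros u Hu. apply ball_R. apply Hd.
  apply ball_R. rewrite Rminus_0_r, Rabs_right by lra. lra. lra.
Qed.

Lemma ed_cont (f : R -> R) m :
  (forall e, 0 < e -> exists d, 0 < d /\ forall u, Rabs (u - m) < d -> Rabs (f u - f m) < e) ->
  filterlim f (locally m) (locally (f m)).
Proof.
  intros H. apply filterlim_locally. intros e.
  destruct (H e (cond_pos e)) as [d [Hd Hd']].
  exists (mkposreal d Hd). intros y Hy. apply ball_R. apply Hd'. apply ball_R. exact Hy.
Qed.

Lemma cont_pos_near (f : R -> R) m : filterlim f (locally m) (locally (f m)) -> 0 < f m ->
  exists d, 0 < d /\ forall u, Rabs (u - m) < d -> 0 < f u.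
Proof.
  intros H Hp. destruct (cont_ed f m H (f m) Hp) as [d [Hd Hd']].
  exists d. split; auto. intros u Hu. specialize (Hd' u Hu).
  apply Rabs_def2 in Hd'. lra.
Qed.

Lemma cont_neg_near (f : R -> R) m : filterlim f (locally m) (locally (f m)) -> f m < 0 ->
  exists d, 0 < d /\ forall u, Rabs (u - m) < d -> f u < 0.
Proof.
  intros H Hp. destruct (cont_ed f m H (- f m) ltac:(lra)) as [d [Hd Hd']].
  exists d. split; auto. intros u Hu. specialize (Hd' u Hu).
  apply Rabs_def2 in Hd'. lra.
Qed.

Lemma rc_pos_near (f : R -> R) : filterlim f (at_right 0) (locally (f 0)) -> 0 < f 0 ->
  exists d, 0 < d /\ forall u, 0 <= u < d -> 0 < f u.
Proof.
  intros H Hp. destruct (rc_ed f (f 0) H (f 0) Hp) as [d [Hd Hd']].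
  exists d. split; auto. intros u Hu. destruct (Req_dec u 0) as [->|Hn]; auto.
  specialize (Hd' u ltac:(lra)). apply Rabs_def2 in Hd'. lra.
Qed.

Lemma cont_left_ge (f : R -> R) m C d : 0 < d -> filterlim f (locally m) (locally (f m)) ->
  (forall u, m - d < u < m -> C <= f u) -> C <= f m.
Proof.
  intros Hd H Hu. destruct (Rle_or_lt C (f m)) as [|Hlt]; auto.
  destruct (cont_ed f m H (C - f m) ltac:(lra)) as [d' [Hd' Hd'']].
  set (u := m - Rmin d d' / 2).
  assert (Hmin : 0 < Rmin d d') by (apply Rmin_pos; auto).
  assert (Hm1 : Rmin d d' <= d) by apply Rmin_l.
  assert (Hm2 : Rmin d d' <= d') by apply Rmin_r.
  specialize (Hu u ltac:(unfold u; lra)).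
  specialize (Hd'' u ltac:(unfold u; rewrite Rabs_left; lra)).
  apply Rabs_def2 in Hd''. lra.
Qed.

Lemma rc_ge (f : R -> R) l C d : 0 < d -> filterlim f (at_right 0) (locally l) ->
  (forall u, 0 < u < d -> C <= f u) -> C <= l.
Proof.
  intros Hd H Hu. destruct (Rle_or_lt C l) as [|Hlt]; auto.
  destruct (rc_ed f l H (C - l) ltac:(lra)) as [d' [Hd' Hd'']].
  set (u := Rmin d d' / 2).
  assert (Hmin : 0 < Rmin d d') by (apply Rmin_pos; auto).
  assert (Hm1 : Rmin d d' <= d) by apply Rmin_l.
  assert (Hm2 : Rmin d d' <= d') by apply Rmin_r.
  specialize (Hu u ltac:(unfold u; lra)).
  specialize (Hd'' u ltac:(unfold u; lra)).
  apply Rabs_def2 in Hd''. lra.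
Qed.

Lemma deriv_cont (f : R -> R) x l : is_derive f x l -> filterlim f (locally x) (locally (f x)).
Proof. intros H. apply (@ex_derive_continuous R_AbsRing R_NormedModule f x). eexists; eauto. Qed.

Lemma exd_cont (f : R -> R) x : ex_derive f x -> continuous f x.
Proof. intros H. apply (@ex_derive_continuous R_AbsRing R_NormedModule f x). auto. Qed.

Lemma cont_rc (f : R -> R) : continuous f 0 -> filterlim f (at_right 0) (locally (f 0)).
Proof. intros H. eapply filterlim_filter_le_1; [|exact H]. intros P HP. apply filter_imp with (2:=HP). auto. Qed.

Definition Gf (U g h : R -> R) (w s : R) : R := 2 * (E0 U g h s - Vfun U h w s).

Lemma Gf_ss (U g h : R -> R) (s : R) : s <> 0 -> Gf U g h s s = g s ^ 2.
Proof. intros. unfold Gf, E0, Vfun. field. auto. Qed.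

Lemma Gf_mono (U g h : R -> R) (s : R) :
  0 < s -> (forall r, 0 < r -> ex_derive U r) ->
  (forall r2, s <= r2 -> 0 <= - Derive U r2 + Mfun h s ^ 2 / r2 ^ 3) ->
  forall w, s <= w -> g s ^ 2 <= Gf U g h w s.
Proof.
  intros Hs HU HM w Hw.
  rewrite <- (Gf_ss U g h s) by lra.
  destruct (Req_dec w s) as [->|Hne]; [lra|].
  destruct (MVT_gen (fun w => Gf U g h w s) s w
     (fun c => 2 * (- Derive U c + Mfun h s ^ 2 / c ^ 3))) as [c [Hc1 Hc2]].
  - intros c Hc. rewrite Rmin_left in Hc by lra. rewrite Rmax_right in Hc by lra.
    unfold Gf, Vfun. auto_derive.
    + repeat split; auto. apply HU; lra. apply Rgt_not_eq. apply Rmult_lt_0_compat; [lra|]. nra.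
    + unfold Mfun. change (Derive (fun x => U x) c) with (Derive U c). field. lra.
  - intros c Hc. rewrite Rmin_left in Hc by lra. rewrite Rmax_right in Hc by lra.
    apply continuity_pt_filterlim. apply (@ex_derive_continuous R_AbsRing R_NormedModule (fun w0 => Gf U g h w0 s)).
    unfold Gf, Vfun. auto_derive. repeat split; auto. apply HU; lra.
    apply Rgt_not_eq. apply Rmult_lt_0_compat; [lra|]. nra.
  - rewrite Rmin_left in Hc1 by lra. rewrite Rmax_right in Hc1 by lra.
    assert (0 <= 2 * (- Derive U c + Mfun h s ^ 2 / c ^ 3)).
    { specialize (HM c ltac:(lra)). lra. }
    nra.
Qed.

Lemma exRc (f : R -> R) a b : (forall w, Rmin a b <= w <= Rmax a b -> continuous f w) -> ex_RInt f a b.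
Proof. intros H. apply (@ex_RInt_continuous R_CompleteNormedModule). exact H. Qed.

Lemma RI_chasles (f : R -> R) a b c : ex_RInt f a b -> ex_RInt f b c ->
  RInt f a b + RInt f b c = RInt f a c.
Proof. intros H1 H2. apply (@RInt_Chasles R_CompleteNormedModule); auto. Qed.

Lemma RI_minus (f g : R -> R) a b : ex_RInt f a b -> ex_RInt g a b ->
  RInt (fun x => f x - g x) a b = RInt f a b - RInt g a b.
Proof. intros H1 H2. apply (@RInt_minus R_CompleteNormedModule); auto. Qed.

Lemma RI_const (c a b : R) : RInt (fun _ => c) a b = (b - a) * c.
Proof. apply (@RInt_const R_CompleteNormedModule). Qed.

Lemma RI_scal (f : R -> R) a b k : ex_RInt f a b -> RInt (fun x => k * f x) a b = k * RInt f a b.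
Proof. intros H. apply (@RInt_scal R_CompleteNormedModule); auto. Qed.

Lemma exR_minus (f g : R -> R) a b : ex_RInt f a b -> ex_RInt g a b ->
  ex_RInt (fun x => f x - g x) a b.
Proof. intros H1 H2. apply (@ex_RInt_minus R_NormedModule); auto. Qed.

Lemma exR_scal (f : R -> R) a b k : ex_RInt f a b -> ex_RInt (fun x => k * f x) a b.
Proof. intros H. apply (@ex_RInt_scal R_NormedModule); auto. Qed.

Lemma exR_const (c a b : R) : ex_RInt (fun _ => c) a b.
Proof. apply (@ex_RInt_const R_NormedModule). Qed.

Lemma RI_abs_le (f : R -> R) a b M : ex_RInt f a b ->
  (forall t, Rmin a b <= t <= Rmax a b -> Rabs (f t) <= M) ->
  Rabs (RInt f a b) <= Rabs (b - a) * M.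
Proof.
  intros Hex H. destruct (Rle_or_lt a b) as [Hab|Hab].
  - rewrite (Rabs_right (b - a)) by lra. apply abs_RInt_le_const; auto.
    intros t Ht. apply H. rewrite Rmin_left, Rmax_right; lra.
  - rewrite <- (@opp_RInt_swap R_CompleteNormedModule) by (apply (@ex_RInt_swap R_NormedModule); auto).
    change (opp (RInt f b a)) with (- RInt f b a). rewrite Rabs_Ropp.
    rewrite (Rabs_left (b - a)) by lra. replace (- (b - a)) with (a - b) by ring.
    apply abs_RInt_le_const; [lra| apply (@ex_RInt_swap R_NormedModule); auto |].
    intros t Ht. apply H. rewrite Rmin_right, Rmax_left; lra.
Qed.

Lemma c_minus (f g : R -> R) x : continuous f x -> continuous g x -> continuous (fun y => f y - g y) x.
Proof. intros. apply (@continuous_minus R_UniformSpace R_AbsRing R_NormedModule); auto. Qed.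
Lemma c_mul (f g : R -> R) x : continuous f x -> continuous g x -> continuous (fun y => f y * g y) x.
Proof. intros. apply (@continuous_mult R_UniformSpace R_AbsRing); auto. Qed.
Lemma c_const (c x : R) : continuous (fun _ : R => c) x.
Proof. apply (@continuous_const R_UniformSpace R_UniformSpace). Qed.

Lemma ed_deriv (f : R -> R) x l : is_derive f x l ->
  forall eta, 0 < eta -> exists d, 0 < d /\ forall s, Rabs (s - x) < d ->
    Rabs (f s - f x - l * (s - x)) <= eta * Rabs (s - x).
Proof.
  intros H eta Heta. apply is_derive_Reals in H.
  destruct (H eta Heta) as [d Hd]. exists d. split. apply cond_pos.
  intros s Hs. destruct (Req_dec s x) as [->|Hn].
  - rewrite !Rminus_diag, Rmult_0_r, Rminus_0_r, Rabs_R0. lra.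
  - specialize (Hd (s - x) ltac:(lra) Hs). replace (x + (s - x)) with s in Hd by ring.
    assert (Hp : 0 < Rabs (s - x)) by (apply Rabs_pos_lt; lra).
    replace (f s - f x - l * (s - x)) with (((f s - f x) / (s - x) - l) * (s - x)) by (field; lra).
    rewrite Rabs_mult. apply Rmult_le_compat_r; lra.
Qed.

Lemma psi2 (p p0 r : R) : 0 < r -> r <= p -> r <= p0 ->
  Rabs (/ p - / p0 + / 2 * (/ p0) ^ 3 * (p ^ 2 - p0 ^ 2)) <= (p ^ 2 - p0 ^ 2) ^ 2 / r ^ 5.
Proof.
  intros Hr Hp Hp0.
  replace (/ p - / p0 + / 2 * (/ p0) ^ 3 * (p ^ 2 - p0 ^ 2)) with
    ((p - p0) ^ 2 * ((p + 2 * p0) / (2 * p * p0 ^ 3))) by (field; lra).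
  replace ((p ^ 2 - p0 ^ 2) ^ 2 / r ^ 5) with ((p - p0) ^ 2 * ((p + p0) ^ 2 / r ^ 5)) by (field; lra).
  assert (H1 : 0 <= (p + 2 * p0) / (2 * p * p0 ^ 3)).
  { apply Rle_mult_inv_pos. lra. apply Rmult_lt_0_compat. lra. apply pow_lt. lra. }
  rewrite Rabs_right by (apply Rle_ge, Rmult_le_pos; [apply pow2_ge_0|auto]).
  apply Rmult_le_compat_l. apply pow2_ge_0.
  apply Rle_trans with ((p + p0) ^ 2 / (p * p0 ^ 4)).
  - assert (0 < p * p0 ^ 3) by (apply Rmult_lt_0_compat; [lra|apply pow_lt; lra]).
    unfold Rdiv. apply Rmult_le_reg_r with (2 * p * p0 ^ 4).
    { apply Rmult_lt_0_compat. lra. apply pow_lt. lra. }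
    replace ((p + 2 * p0) * / (2 * p * p0 ^ 3) * (2 * p * p0 ^ 4)) with ((p + 2 * p0) * p0) by (field; lra).
    replace ((p + p0) ^ 2 * / (p * p0 ^ 4) * (2 * p * p0 ^ 4)) with (2 * (p + p0) ^ 2) by (field; lra).
    nra.
  - unfold Rdiv. apply Rmult_le_compat_l. apply pow2_ge_0.
    apply Rinv_le_contravar. apply pow_lt; lra.
    replace (r ^ 5) with (r * r ^ 4) by ring.
    apply Rmult_le_compat; try lra. apply pow_le; lra. apply pow_incr. lra.
Qed.

Lemma psi2x (x x0 c : R) : 0 < c -> c <= x -> c <= x0 ->
  Rabs (/ sqrt x - / sqrt x0 + / 2 * (/ sqrt x0) ^ 3 * (x - x0)) <= (x - x0) ^ 2 / sqrt c ^ 5.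
Proof.
  intros Hc Hx Hx0.
  assert (Hsx : sqrt x ^ 2 = x) by (apply pow2_sqrt; lra).
  assert (Hsx0 : sqrt x0 ^ 2 = x0) by (apply pow2_sqrt; lra).
  replace (x - x0) with (sqrt x ^ 2 - sqrt x0 ^ 2) by (rewrite Hsx, Hsx0; ring).
  apply psi2. apply sqrt_lt_R0; lra. apply sqrt_le_1_alt; lra. apply sqrt_le_1_alt; lra.
Qed.

Lemma q_pos (p : pt) : p <> (0,0) -> 0 < fst p ^ 2 + snd p ^ 2.
Proof.
  destruct p as [a b]; simpl. intros H.
  destruct (Req_dec a 0) as [->|Ha]; destruct (Req_dec b 0) as [->|Hb].
  - exfalso; auto.
  - nra.
  - nra.
  - nra.
Qed.

Lemma enorm_sq (p : pt) : enorm p ^ 2 = fst p ^ 2 + snd p ^ 2.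
Proof. unfold enorm. rewrite pow2_sqrt; auto. nra. Qed.

Lemma enorm_pos (p : pt) : p <> (0,0) -> 0 < enorm p.
Proof. intros H. unfold enorm. apply sqrt_lt_R0. apply q_pos; auto. Qed.


Lemma particle_mom (U : R -> R) (x : pt) (Y V : R -> pt) :
  (forall r, 0 < r -> ex_derive U r) ->
  solves_newton U Y V x ->
  forall t, 0 <= t ->
    fst (Y t) * snd (V t) - snd (Y t) * fst (V t) = fst x * snd (V 0) - snd x * fst (V 0).
Proof.
  intros HU [HY0 [Hnz [Hder [HcY HcV]]]] t Ht.
  rewrite <- HY0.
  apply (const0 (fun t => fst (Y t) * snd (V t) - snd (Y t) * fst (V t)) (fun _ => 0)); auto.
  - intros u Hu. destruct (Hder u Hu) as [H1 H2].
    eapply deq. apply dsub; apply dmul.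
    + apply dfst; exact H1.
    + apply dsnd; exact H2.
    + apply dsnd; exact H1.
    + apply dfst; exact H2.
    + unfold Ffield; simpl. field. apply Rgt_not_eq, enorm_pos. apply Hnz. lra.
  - apply lsub. apply at_right_proper_filter. all: try apply lmul; try apply at_right_proper_filter.
    all: first [apply lfst | apply lsnd]; auto; apply at_right_proper_filter.
Qed.

Lemma d_enorm (Y : R -> pt) (t : R) (w : pt) :
  is_derive Y t w -> Y t <> (0,0) ->
  is_derive (fun u => enorm (Y u)) t ((fst (Y t) * fst w + snd (Y t) * snd w) / enorm (Y t)).
Proof.
  intros H Hn. unfold enorm.
  eapply deq.
  - apply (is_derive_sqrt (fun u => fst (Y u) ^ 2 + snd (Y u) ^ 2)).
    + apply dadd; apply is_derive_pow; [apply dfst|apply dsnd]; exact H.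
    + apply q_pos; auto.
  - simpl. field. apply Rgt_not_eq. apply sqrt_lt_R0. apply q_pos; auto.
Qed.

Lemma rc_enorm (Y : R -> pt) :
  filterlim Y (at_right 0) (locally (Y 0)) ->
  filterlim (fun u => enorm (Y u)) (at_right 0) (locally (enorm (Y 0))).
Proof.
  intros H. unfold enorm. apply (lcomp _ _ sqrt). apply at_right_proper_filter.
  - apply ladd. apply at_right_proper_filter.
    + apply lsq; auto. apply lfst; auto.
    + apply lsq; auto. apply lsnd; auto.
  - apply continuous_sqrt.
Qed.

Lemma particle_energy (U : R -> R) (x : pt) (Y V : R -> pt) :
  (forall r, 0 < r -> ex_derive U r) ->
  solves_newton U Y V x ->
  forall t, 0 <= t ->
    / 2 * (fst (V t) ^ 2 + snd (V t) ^ 2) + U (enorm (Y t)) =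
    / 2 * (fst (V 0) ^ 2 + snd (V 0) ^ 2) + U (enorm x).
Proof.
  intros HU [HY0 [Hnz [Hder [HcY HcV]]]] t Ht.
  rewrite <- HY0.
  apply (const0 (fun t => / 2 * (fst (V t) ^ 2 + snd (V t) ^ 2) + U (enorm (Y t))) (fun _ => 0)); auto.
  - intros u Hu. destruct (Hder u Hu) as [H1 H2].
    assert (Hn : Y u <> (0,0)) by (apply Hnz; lra).
    assert (Hr : 0 < enorm (Y u)) by (apply enorm_pos; auto).
    eapply deq. apply dadd.
    + apply (is_derive_scal (fun u => fst (V u) ^ 2 + snd (V u) ^ 2) u (/2)) .
      apply dadd; apply is_derive_pow; [apply dfst|apply dsnd]; exact H2.
    + apply dcomp. apply Derive_correct. apply HU. exact Hr.
      apply d_enorm; [exact H1 | exact Hn].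
    + unfold Ffield; simpl. field. lra.
  - assert (Hx : 0 < enorm (Y 0)) by (apply enorm_pos; apply Hnz; lra).
    apply ladd. apply at_right_proper_filter.
    + apply lmul. apply at_right_proper_filter. apply lconst. apply at_right_proper_filter.
      apply ladd. apply at_right_proper_filter.
      * apply lsq; auto. apply lfst; auto.
      * apply lsq; auto. apply lsnd; auto.
    + apply (lcomp _ _ U). apply at_right_proper_filter. apply rc_enorm; auto.
      apply exd_cont. apply HU; auto.
Qed.

Lemma particle_rho_sq (U g h : R -> R) (x : pt) (Y V : R -> pt) :
  (forall r, 0 < r -> ex_derive U r) ->
  solves_newton U Y V x ->
  radial_vel x (V 0) = g (enorm x) ->
  angular_vel x (V 0) = h (enorm x) ->
  forall t, 0 <= t ->
    fst (Y t) * snd (V t) - snd (Y t) * fst (V t) = Mfun h (enorm x) /\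
    (fst (Y t) * fst (V t) + snd (Y t) * snd (V t)) ^ 2 =
      enorm (Y t) ^ 2 * Gf U g h (enorm (Y t)) (enorm x).
Proof.
  intros HU Hs Hdr Hdphi t Ht.
  pose proof (particle_mom U x Y V HU Hs t Ht) as Hm.
  pose proof (particle_energy U x Y V HU Hs t Ht) as He.
  destruct Hs as [HY0 [Hnz _]].
  assert (Hx : 0 < enorm x) by (rewrite <- HY0; apply enorm_pos; apply Hnz; lra).
  assert (Hr : 0 < enorm (Y t)) by (apply enorm_pos; apply Hnz; lra).
  pose proof (enorm_sq x) as Hx2. pose proof (enorm_sq (Y t)) as Hr2.
  unfold radial_vel, angular_vel in *.
  set (s := enorm x) in *. set (r := enorm (Y t)) in *.
  set (x1 := fst x) in *. set (x2 := snd x) in *.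
  set (w1 := fst (V 0)) in *. set (w2 := snd (V 0)) in *.
  set (y1 := fst (Y t)) in *. set (y2 := snd (Y t)) in *.
  set (v1 := fst (V t)) in *. set (v2 := snd (V t)) in *.
  assert (HM0 : x1 * w2 - x2 * w1 = h s * s ^ 2).
  { rewrite <- Hdphi. field. lra. }
  assert (HR0 : x1 * w1 + x2 * w2 = g s * s).
  { rewrite <- Hdr. field. lra. }
  assert (Hw : w1 ^ 2 + w2 ^ 2 = g s ^ 2 + s ^ 2 * h s ^ 2).
  { apply Rmult_eq_reg_l with (s ^ 2); [|nra].
    transitivity ((x1 * w1 + x2 * w2) ^ 2 + (x1 * w2 - x2 * w1) ^ 2).
    rewrite Hx2. ring. rewrite HM0, HR0. ring. }
  assert (HMt : y1 * v2 - y2 * v1 = Mfun h s).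
  { rewrite Hm. unfold Mfun. rewrite HM0. ring. }
  split; auto.
  assert (Hv : v1 ^ 2 + v2 ^ 2 = 2 * (E0 U g h s - U r)).
  { unfold E0. rewrite Hw in He. lra. }
  transitivity ((y1 ^ 2 + y2 ^ 2) * (v1 ^ 2 + v2 ^ 2) - (y1 * v2 - y2 * v1) ^ 2).
  ring. rewrite HMt, Hv, <- Hr2. unfold Gf, Vfun, Mfun. field. lra.
Qed.

Lemma sqrt_ge_of_sq (a q : R) : 0 <= a -> 0 <= q -> a ^ 2 <= q -> a <= sqrt q.
Proof.
  intros Ha Hq H. rewrite <- (sqrt_pow2 a Ha). apply sqrt_le_1_alt. exact H.
Qed.

Lemma particle_rho_pos (U g h : R -> R) (x : pt) (Y V : R -> pt) :
  (forall r, 0 < r -> ex_derive U r) ->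
  solves_newton U Y V x ->
  radial_vel x (V 0) = g (enorm x) ->
  0 < g (enorm x) ->
  angular_vel x (V 0) = h (enorm x) ->
  (forall r2, enorm x <= r2 -> 0 <= - Derive U r2 + Mfun h (enorm x) ^ 2 / r2 ^ 3) ->
  forall t, 0 <= t -> 0 < fst (Y t) * fst (V t) + snd (Y t) * snd (V t).
Proof.
  intros HU Hs Hdr Hg Hdphi HM.
  pose proof (particle_rho_sq U g h x Y V HU Hs Hdr Hdphi) as Hsq.
  destruct Hs as [HY0 [Hnz [Hder [HcY HcV]]]].
  set (s := enorm x) in *.
  assert (Hx : 0 < s) by (unfold s; rewrite <- HY0; apply enorm_pos; apply Hnz; lra).
  set (rho := fun t => fst (Y t) * fst (V t) + snd (Y t) * snd (V t)).
  set (q := fun t => fst (Y t) ^ 2 + snd (Y t) ^ 2).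
  change (forall t, 0 <= t -> 0 < rho t).
  assert (Hrd : forall t, 0 < t -> filterlim rho (locally t) (locally (rho t))).
  { intros t Ht. destruct (Hder t Ht) as [H1 H2]. eapply deriv_cont.
    unfold rho. apply dadd; apply dmul.
    apply (dfst _ _ _ H1). apply (dfst _ _ _ H2). apply (dsnd _ _ _ H1). apply (dsnd _ _ _ H2). }
  assert (Hrrc : filterlim rho (at_right 0) (locally (rho 0))).
  { unfold rho. apply ladd; auto; apply lmul; auto. apply lfst; auto. apply lfst; auto. apply lsnd; auto. apply lsnd; auto. }
  assert (Hqd : forall t, 0 < t -> is_derive q t (2 * rho t)).
  { intros t Ht. destruct (Hder t Ht) as [H1 H2]. eapply deq.
    unfold q. apply dadd; apply is_derive_pow. apply (dfst _ _ _ H1). apply (dsnd _ _ _ H1).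
    unfold rho; simpl; ring. }
  assert (Hqrc : filterlim q (at_right 0) (locally (q 0))).
  { unfold q. apply ladd; auto; apply lsq; auto. apply lfst; auto. apply lsnd; auto. }
  assert (Hq0 : q 0 = s ^ 2).
  { unfold q, s. rewrite enorm_sq, HY0. reflexivity. }
  assert (Hrho0 : 0 < rho 0).
  { unfold radial_vel in Hdr. unfold rho. rewrite HY0.
    fold s in Hdr. assert (fst x * fst (V 0) + snd x * snd (V 0) = g s * s).
    { rewrite <- Hdr. field. lra. } rewrite H. nra. }
  assert (Hkey : forall t, 0 <= t -> s ^ 2 <= q t -> rho t <> 0).
  { intros t Ht Hqt Hr0.
    destruct (Hsq t Ht) as [_ Hs2]. fold s in Hs2. assert (Hs3 : rho t ^ 2 = enorm (Y t) ^ 2 * Gf U g h (enorm (Y t)) s) by exact Hs2.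
    clear Hs2. rename Hs3 into Hs2.
    assert (Hen : s <= enorm (Y t)).
    { unfold enorm. unfold q in Hqt. apply sqrt_ge_of_sq; try lra; nra. }
    pose proof (Gf_mono U g h s Hx HU HM (enorm (Y t)) Hen) as HG.
    rewrite Hr0 in Hs2. assert (0 < enorm (Y t) ^ 2 * Gf U g h (enorm (Y t)) s).
    { apply Rmult_lt_0_compat. nra. nra. }
    simpl in Hs2. lra. }
  intros t0 Ht0. destruct (Rlt_or_le 0 (rho t0)) as [|Hle]; auto. exfalso.
  set (E := fun tau => 0 <= tau /\ forall u, 0 <= u <= tau -> 0 < rho u).
  assert (HEb : forall tau, E tau -> tau < t0).
  { intros tau [Htau Hu]. destruct (Rlt_or_le tau t0); auto.
    specialize (Hu t0 ltac:(lra)). lra. }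
  destruct (completeness E) as [m [Hub Hlub]].
  { exists t0. intros tau Htau. left. apply HEb; auto. }
  { exists 0. split. lra. intros u Hu. replace u with 0 by lra. auto. }
  assert (Hm0 : 0 <= m).
  { apply Hub. split. lra. intros u Hu. replace u with 0 by lra. auto. }
  assert (Ha : forall u, 0 <= u < m -> 0 < rho u).
  { intros u Hu. destruct (Rlt_or_le 0 (rho u)) as [|Hl]; auto. exfalso.
    assert (m <= u).
    { apply Hlub. intros tau [Htau Htu]. destruct (Rle_or_lt tau u) as [|Hlt]; auto.
      specialize (Htu u ltac:(lra)). lra. }
    lra. }
  assert (Hb : s ^ 2 <= q m).
  { destruct (Req_dec m 0) as [->|Hmn]. lra.
    apply (cont_left_ge q m (s ^ 2) m). lra.
    eapply deriv_cont. apply Hqd. lra.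
    intros u Hu.
    destruct (MVT0 q (fun t => 2 * rho t) Hqd Hqrc 0 u ltac:(lra)) as [c [Hc1 [Hc2 Hc3]]].
    specialize (Ha c ltac:(lra)). nra. }
  assert (Hc : rho m <> 0) by (apply Hkey; auto).
  assert (Hd : 0 < rho m).
  { destruct (Req_dec m 0) as [->|Hmn]. auto.
    destruct (Rlt_or_le 0 (rho m)) as [|Hl]; auto. exfalso.
    destruct (cont_neg_near rho m (Hrd m ltac:(lra)) ltac:(lra)) as [d [Hd Hd']].
    assert (Hmin : 0 < Rmin d m) by (apply Rmin_pos; lra).
    pose proof (Rmin_l d m). pose proof (Rmin_r d m).
    specialize (Hd' (m - Rmin d m / 2) ltac:(rewrite Rabs_left; lra)).
    specialize (Ha (m - Rmin d m / 2) ltac:(lra)). lra. }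
  assert (He : exists d, 0 < d /\ forall u, m <= u < m + d -> 0 < rho u).
  { destruct (Req_dec m 0) as [Hm|Hmn].
    - destruct (rc_pos_near rho Hrrc ltac:(lra)) as [d [Hd1 Hd2]].
      exists d. split; auto. intros u Hu. apply Hd2. lra.
    - destruct (cont_pos_near rho m (Hrd m ltac:(lra)) Hd) as [d [Hd1 Hd2]].
      exists d. split; auto. intros u Hu. apply Hd2. rewrite Rabs_right; lra. }
  destruct He as [d [Hd1 Hd2]].
  assert (m + d / 2 <= m).
  { apply Hub. split. lra. intros u Hu. destruct (Rlt_or_le u m).
    apply Ha; lra. apply Hd2; lra. }
  lra.
Qed.

Definition Tf (U g h : R -> R) (s z : R) : R := RInt (fun w => integrand U g h w s) s z.

Lemma Gf_cont_w (U g h : R -> R) (s w : R) : 0 < w -> (forall r, 0 < r -> ex_derive U r) ->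
  continuous (fun w => Gf U g h w s) w.
Proof.
  intros Hw HU. apply exd_cont. unfold Gf, Vfun. auto_derive. repeat split; auto.
  apply Rgt_not_eq. nra.
Qed.

Lemma integrand_cont (U g h : R -> R) (s w : R) : 0 < w -> (forall r, 0 < r -> ex_derive U r) ->
  0 < Gf U g h w s -> continuous (fun w => integrand U g h w s) w.
Proof.
  intros Hw HU HG. apply exd_cont. unfold integrand.
  apply (ex_derive_comp (fun x => / sqrt x) (fun w => 2 * (E0 U g h s - Vfun U h w s))).
  - auto_derive. split. exact HG. split; auto. apply Rgt_not_eq, sqrt_lt_R0. exact HG.
  - unfold Vfun. auto_derive. repeat split; auto. apply Rgt_not_eq. nra.
Qed.

Lemma integrand_near (U g h : R -> R) (s : R) :
  0 < s -> (forall r, 0 < r -> ex_derive U r) -> 0 < g s ->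
  (forall r2, s <= r2 -> 0 <= - Derive U r2 + Mfun h s ^ 2 / r2 ^ 3) ->
  exists d, 0 < d /\ forall w, s - d < w -> 0 < w /\ 0 < Gf U g h w s.
Proof.
  intros Hs HU Hg HM.
  destruct (cont_pos_near (fun w => Gf U g h w s) s (Gf_cont_w U g h s s Hs HU))
    as [d [Hd Hd']].
  { rewrite Gf_ss by lra. nra. }
  exists (Rmin d (s / 2)). split. apply Rmin_pos; lra.
  pose proof (Rmin_l d (s/2)). pose proof (Rmin_r d (s/2)).
  intros w Hw. split. lra.
  destruct (Rle_or_lt s w).
  - pose proof (Gf_mono U g h s Hs HU HM w H1). nra.
  - apply Hd'. rewrite Rabs_left; lra.
Qed.

Lemma RInt_deriv_near (U g h : R -> R) (s : R) :
  0 < s -> (forall r, 0 < r -> ex_derive U r) -> 0 < g s ->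
  (forall r2, s <= r2 -> 0 <= - Derive U r2 + Mfun h s ^ 2 / r2 ^ 3) ->
  exists d, 0 < d /\ forall b, s - d < b ->
    is_derive (fun b => Tf U g h s b) b (integrand U g h b s).
Proof.
  intros Hs HU Hg HM.
  destruct (integrand_near U g h s Hs HU Hg HM) as [d [Hd Hd']].
  exists d. split; auto. intros b Hb.
  assert (Hex : forall b, s - d < b -> ex_RInt (fun w => integrand U g h w s) s b).
  { intros b0 Hb0. apply (@ex_RInt_continuous R_CompleteNormedModule). intros z Hz.
    assert (s - d < z).
    { destruct (Rle_or_lt s b0). rewrite Rmin_left in Hz by lra. lra.
      rewrite Rmin_right in Hz by lra. lra. }
    destruct (Hd' z H) as [Hz1 Hz2]. apply integrand_cont; auto. }
  apply (is_derive_RInt (fun w => integrand U g h w s) (fun b => Tf U g h s b) s b).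
  - apply filter_imp with (2 := open_gt (s - d) b Hb). intros b0 Hb0.
    apply (@RInt_correct R_CompleteNormedModule). apply Hex; auto.
  - destruct (Hd' b Hb). apply integrand_cont; auto.
Qed.

Lemma particle_time (U g h : R -> R) (x : pt) (Y V : R -> pt) :
  (forall r, 0 < r -> ex_derive U r) ->
  solves_newton U Y V x ->
  radial_vel x (V 0) = g (enorm x) ->
  0 < g (enorm x) ->
  angular_vel x (V 0) = h (enorm x) ->
  (forall r2, enorm x <= r2 -> 0 <= - Derive U r2 + Mfun h (enorm x) ^ 2 / r2 ^ 3) ->
  (forall t, 0 < t -> enorm x < enorm (Y t)) /\
  (forall t, 0 <= t -> fst (Y t) * fst (V t) + snd (Y t) * snd (V t) =
                     enorm (Y t) * sqrt (Gf U g h (enorm (Y t)) (enorm x))) /\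
  (forall t, 0 <= t -> Tf U g h (enorm x) (enorm (Y t)) = t).
Proof.
  intros HU Hs Hdr Hg Hdphi HM.
  pose proof (particle_rho_sq U g h x Y V HU Hs Hdr Hdphi) as Hsq.
  pose proof (particle_rho_pos U g h x Y V HU Hs Hdr Hg Hdphi HM) as Hpos.
  pose proof Hs as Hs'.
  destruct Hs as [HY0 [Hnz [Hder [HcY HcV]]]].
  set (s := enorm x) in *.
  assert (Hx : 0 < s) by (unfold s; rewrite <- HY0; apply enorm_pos; apply Hnz; lra).
  set (rho := fun t => fst (Y t) * fst (V t) + snd (Y t) * snd (V t)) in *.
  set (q := fun t => fst (Y t) ^ 2 + snd (Y t) ^ 2).
  assert (Hqd : forall t, 0 < t -> is_derive q t (2 * rho t)).
  { intros t Ht. destruct (Hder t Ht) as [H1 H2]. eapply deq.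
    unfold q. apply dadd; apply is_derive_pow. apply (dfst _ _ _ H1). apply (dsnd _ _ _ H1).
    unfold rho; simpl; ring. }
  assert (Hqrc : filterlim q (at_right 0) (locally (q 0))).
  { unfold q. apply ladd; auto; apply lsq; auto. apply lfst; auto. apply lsnd; auto. }
  assert (Hq0 : q 0 = s ^ 2).
  { unfold q, s. rewrite enorm_sq, HY0. reflexivity. }
  assert (Hr : forall t, 0 < t -> s < enorm (Y t)).
  { intros t Ht.
    pose proof (incr0 q (fun t => 2 * rho t) Hqd
       ltac:(intros u Hu; cbv beta; specialize (Hpos u ltac:(lra)); unfold rho; lra) Hqrc 0 t ltac:(lra)) as Hi.
    rewrite Hq0 in Hi.
    assert (0 <= enorm (Y t)) by (unfold enorm; apply sqrt_pos).
    rewrite <- (sqrt_pow2 s) by lra. unfold enorm. apply sqrt_lt_1_alt. split. nra.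
    unfold q in Hi. exact Hi. }
  assert (Hrge : forall t, 0 <= t -> s <= enorm (Y t)).
  { intros t Ht. destruct (Req_dec t 0) as [->|Hn]. rewrite HY0. unfold s. lra.
    left. apply Hr. lra. }
  assert (Hrho : forall t, 0 <= t -> rho t = enorm (Y t) * sqrt (Gf U g h (enorm (Y t)) s)).
  { intros t Ht. destruct (Hsq t Ht) as [_ H2]. fold s in H2.
    pose proof (Gf_mono U g h s Hx HU HM (enorm (Y t)) (Hrge t Ht)) as HG.
    assert (0 <= enorm (Y t)) by (unfold enorm; apply sqrt_pos).
    rewrite <- (sqrt_pow2 (rho t)) by (left; apply Hpos; auto).
    change (rho t ^ 2 = enorm (Y t) ^ 2 * Gf U g h (enorm (Y t)) s) in H2.
    rewrite H2. rewrite sqrt_mult by nra. rewrite sqrt_pow2 by auto. reflexivity. }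
  split; [exact Hr|]. split; [exact Hrho|].
  destruct (RInt_deriv_near U g h s Hx HU Hg HM) as [d [Hd Hd']].
  assert (Hc : forall t, 0 <= t -> Tf U g h s (enorm (Y t)) - t = Tf U g h s (enorm (Y 0)) - 0).
  2: { intros t Ht. specialize (Hc t Ht). unfold Tf in Hc at 2. rewrite HY0 in Hc. fold s in Hc.
       rewrite RInt_point in Hc. unfold zero in Hc; simpl in Hc. lra. }
  apply (const0 (fun t => Tf U g h s (enorm (Y t)) - t) (fun _ => 0)).
  - intros u Hu. destruct (Hder u Hu) as [H1 H2].
    pose proof (Hr u Hu) as Hru.
    pose proof (Gf_mono U g h s Hx HU HM (enorm (Y u)) ltac:(lra)) as HG.
    assert (HGp : 0 < Gf U g h (enorm (Y u)) s) by nra.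
    eapply deq. apply dsub. apply dcomp. apply Hd'. lra.
    apply d_enorm. exact H1. apply Hnz; lra. apply did.
    fold (rho u). rewrite Hrho by lra. unfold integrand. fold (Gf U g h (enorm (Y u)) s).
    cbv beta. field. split. apply Rgt_not_eq, sqrt_lt_R0; auto. lra.
  - auto.
  - apply lsub; auto. 2: { apply filterlim_id. eapply filterlim_filter_le_1; [|apply filterlim_id].
      intros P HP. apply filter_imp with (2:=HP). auto. }
    apply (lcomp _ _ (fun b => Tf U g h s b)); auto.
    apply rc_enorm; auto.
    rewrite HY0. fold s. eapply deriv_cont. apply Hd'. lra.
Qed.

Lemma leib (phi : R -> R -> R) (D : R -> R) (s0 z : R) :
  s0 < z ->
  (exists d0, 0 < d0 /\ forall s, Rabs (s - s0) < d0 -> forall w, Rmin s s0 <= w <= z ->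
      continuous (fun w => phi w s) w) ->
  (forall e, 0 < e -> exists d, 0 < d /\ forall s w, Rabs (s - s0) < d -> Rabs (w - s0) < d ->
      Rabs (phi w s - phi s0 s0) < e) ->
  (forall e, 0 < e -> exists d, 0 < d /\ forall s, Rabs (s - s0) < d -> forall w, s0 <= w <= z ->
      Rabs (phi w s - phi w s0 - (s - s0) * D w) <= e * Rabs (s - s0)) ->
  (forall w, s0 <= w <= z -> continuous D w) ->
  is_derive (fun s => RInt (fun w => phi w s) s z) s0 (- phi s0 s0 + RInt D s0 z).
Proof.
  intros Hz [d0 [Hd0 Hc]] Hj Hu HD.
  apply is_derive_Reals. intros eps Heps.
  destruct (Hj (eps / 4) ltac:(lra)) as [d2 [Hd2 Hd2']].
  destruct (Hu (eps / (4 * (z - s0))) ltac:(apply Rdiv_lt_0_compat; lra)) as [d3 [Hd3 Hd3']].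
  set (del := Rmin (Rmin d0 (z - s0)) (Rmin d2 d3)).
  assert (Hdel : 0 < del) by (unfold del; repeat apply Rmin_pos; auto; lra).
  assert (Hdel0 : del <= d0) by (unfold del; eapply Rle_trans; [apply Rmin_l|apply Rmin_l]).
  assert (Hdelz : del <= z - s0) by (unfold del; eapply Rle_trans; [apply Rmin_l|apply Rmin_r]).
  assert (Hdel2 : del <= d2) by (unfold del; eapply Rle_trans; [apply Rmin_r|apply Rmin_l]).
  assert (Hdel3 : del <= d3) by (unfold del; eapply Rle_trans; [apply Rmin_r|apply Rmin_r]).
  exists (mkposreal del Hdel). intros hh Hhh Hhd. simpl in Hhd.
  set (s := s0 + hh).
  assert (Hs : Rabs (s - s0) < del) by (unfold s; replace (s0 + hh - s0) with hh by ring; auto).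
  assert (Hcs : forall w, Rmin s s0 <= w <= z -> continuous (fun w => phi w s) w).
  { apply Hc. lra. }
  assert (Hc0 : forall w, s0 <= w <= z -> continuous (fun w => phi w s0) w).
  { intros w Hw. apply Hc. rewrite Rminus_diag, Rabs_R0. lra. rewrite Rmin_right; lra. }
  assert (Hms : Rmin s s0 <= s0) by apply Rmin_r.
  assert (Hms' : Rmin s s0 <= s) by apply Rmin_l.
  assert (Hsz : s < z) by (apply Rabs_def2 in Hs; lra).
  assert (Hsd : s - s0 = hh) by (unfold s; ring).
  assert (EX1 : ex_RInt (fun w => phi w s) s0 s).
  { apply exRc. intros w Hw. apply Hcs. split.
    - destruct (Rle_or_lt s0 s). rewrite Rmin_left in Hw by lra. lra. rewrite Rmin_right in Hw by lra. lra.
    - destruct (Rle_or_lt s0 s). rewrite Rmax_right in Hw by lra. lra. rewrite Rmax_left in Hw by lra. lra. }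
  assert (EX2 : ex_RInt (fun w => phi w s) s z).
  { apply exRc. intros w Hw. rewrite Rmin_left in Hw by lra. rewrite Rmax_right in Hw by lra.
    apply Hcs. lra. }
  assert (EX3 : ex_RInt (fun w => phi w s) s0 z).
  { apply exRc. intros w Hw. rewrite Rmin_left in Hw by lra. rewrite Rmax_right in Hw by lra.
    apply Hcs. lra. }
  assert (EX4 : ex_RInt (fun w => phi w s0) s0 z).
  { apply exRc. intros w Hw. rewrite Rmin_left in Hw by lra. rewrite Rmax_right in Hw by lra.
    apply Hc0. lra. }
  assert (EXD : ex_RInt D s0 z).
  { apply exRc. intros w Hw. rewrite Rmin_left in Hw by lra. rewrite Rmax_right in Hw by lra.
    apply HD. lra. }
  pose proof (RI_chasles (fun w => phi w s) s0 s z EX1 EX2) as Hch.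
  set (I1 := RInt (fun w => phi w s - phi w s0 - hh * D w) s0 z).
  set (I2 := RInt (fun w => phi w s - phi s0 s0) s0 s).
  assert (HI1 : @eq R I1 (RInt (fun w => phi w s) s0 z - RInt (fun w => phi w s0) s0 z - hh * RInt D s0 z)).
  { unfold I1. rewrite (RI_minus (fun w => phi w s - phi w s0) (fun w => hh * D w)).
    rewrite (RI_minus (fun w => phi w s) (fun w => phi w s0)) by auto.
    rewrite RI_scal by auto. ring.
    apply exR_minus; auto. apply exR_scal; auto. }
  assert (HI2 : @eq R I2 (RInt (fun w => phi w s) s0 s - (s - s0) * phi s0 s0)).
  { unfold I2. rewrite (RI_minus (fun w => phi w s) (fun w => phi s0 s0)) by (auto; apply exR_const).
    rewrite RI_const. ring. }
  assert (HB1 : Rabs I1 <= Rabs (z - s0) * (eps / (4 * (z - s0)) * Rabs (s - s0))).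
  { apply RI_abs_le.
    - apply exR_minus. apply exR_minus; auto. apply exR_scal; auto.
    - intros t Ht. rewrite Rmin_left in Ht by lra. rewrite Rmax_right in Ht by lra.
      rewrite <- Hsd. apply Hd3'. lra. lra. }
  assert (HB2 : Rabs I2 <= Rabs (s - s0) * (eps / 4)).
  { apply RI_abs_le.
    - apply exR_minus; auto. apply exR_const.
    - intros t Ht. left. apply Hd2'. lra.
      assert (Rabs (t - s0) <= Rabs (s - s0)).
      { destruct (Rle_or_lt s0 s).
        - rewrite Rmin_left in Ht by lra. rewrite Rmax_right in Ht by lra.
          rewrite !Rabs_right by lra. lra.
        - rewrite Rmin_right in Ht by lra. rewrite Rmax_left in Ht by lra.
          rewrite !Rabs_left1 by lra. lra. }
      lra. }
  rewrite (Rabs_right (z - s0)) in HB1 by lra.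
  replace ((RInt (fun w => phi w s) s z - RInt (fun w => phi w s0) s0 z) / hh
            - (- phi s0 s0 + RInt D s0 z)) with ((I1 - I2) / hh).
  2: { rewrite HI1, HI2, <- Hch, Hsd. field. auto. }
  unfold Rdiv. rewrite Rabs_mult, Rabs_inv.
  assert (Hh : 0 < Rabs hh) by (apply Rabs_pos_lt; auto).
  rewrite Hsd in HB1, HB2.
  assert (Rabs (I1 - I2) <= eps / 2 * Rabs hh).
  { eapply Rle_trans. apply Rabs_triang. rewrite Rabs_Ropp.
    replace ((z - s0) * (eps / (4 * (z - s0)) * Rabs hh)) with (eps / 4 * Rabs hh) in HB1 by (field; lra).
    lra. }
  apply Rle_lt_trans with (eps / 2 * Rabs hh * / Rabs hh).
  apply Rmult_le_compat_r. left; apply Rinv_0_lt_compat; auto. auto.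
  replace (eps / 2 * Rabs hh * / Rabs hh) with (eps / 2) by (field; lra). lra.
Qed.

Definition psiG (U g h : R -> R) (s w : R) : R := / sqrt (Gf U g h w s).

Lemma psi_deriv (x : R) : 0 < x -> is_derive (fun x => / sqrt x) x (- / 2 * (/ sqrt x) ^ 3).
Proof.
  intros H. assert (0 < sqrt x) by (apply sqrt_lt_R0; lra).
  eapply deq. apply is_derive_inv. apply (is_derive_sqrt (fun x => x)). apply did. auto. lra.
  simpl. field. lra.
Qed.

Lemma psi_cont (x : R) : 0 < x -> continuous (fun x => / sqrt x) x.
Proof. intros H. apply exd_cont. eexists. apply psi_deriv; auto. Qed.

Lemma exd_Gf_w (U g h : R -> R) (s w : R) : 0 < w -> (forall r, 0 < r -> ex_derive U r) ->
  ex_derive (fun w => Gf U g h w s) w.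
Proof.
  intros Hw HU. unfold Gf, Vfun. auto_derive. repeat split; auto. apply Rgt_not_eq. nra.
Qed.

Lemma exd_psiG_w (U g h : R -> R) (s w : R) : 0 < w -> (forall r, 0 < r -> ex_derive U r) ->
  0 < Gf U g h w s -> ex_derive (fun w => psiG U g h s w) w.
Proof.
  intros Hw HU HG. unfold psiG.
  apply (ex_derive_comp (fun x => / sqrt x) (fun w => Gf U g h w s)).
  eexists. apply psi_deriv; auto. apply exd_Gf_w; auto.
Qed.

Lemma Gf_exd_s (U g h : R -> R) (w s0 : R) :
  ex_derive (fun s => integrand U g h w s) s0 -> 0 < Gf U g h w s0 ->
  ex_derive (fun s => Gf U g h w s) s0.
Proof.
  intros Hd HG.
  set (F := fun s => integrand U g h w s) in *.
  assert (HF0 : 0 < F s0).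
  { unfold F, integrand. apply Rinv_0_lt_compat, sqrt_lt_R0. exact HG. }
  destruct (cont_pos_near F s0 (exd_cont F s0 Hd) HF0) as [d [Hd1 Hd2]].
  assert (Hloc : locally s0 (fun s => / (F s ^ 2) = Gf U g h w s)).
  { exists (mkposreal d Hd1). intros s Hs. apply ball_R in Hs. simpl in Hs.
    specialize (Hd2 s Hs). unfold F, integrand in *. fold (Gf U g h w s) in *.
    destruct (Rle_or_lt (Gf U g h w s) 0) as [Hle|Hlt].
    - rewrite sqrt_neg_0 in Hd2 by auto. rewrite Rinv_0 in Hd2. lra.
    - assert (0 < sqrt (Gf U g h w s)) by (apply sqrt_lt_R0; auto).
      rewrite pow_inv. rewrite Rinv_inv. apply pow2_sqrt. lra. }
  destruct Hd as [l Hl].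
  eexists. apply (is_derive_ext_loc (fun s => / (F s ^ 2))); auto.
  apply is_derive_inv. apply is_derive_pow. exact Hl. apply pow_nonzero. lra.
Qed.

Lemma Gf_split (U g h : R -> R) (w s : R) : w <> 0 ->
  Gf U g h w s = 2 * E0 U g h s - 2 * U w - (s ^ 4 * h s ^ 2) / w ^ 2.
Proof. intros Hw. unfold Gf, Vfun. field. auto. Qed.

Lemma T_deriv (U g h : R -> R) (s0 z : R) :
  0 < s0 -> s0 < z -> (forall r, 0 < r -> ex_derive U r) -> 0 < g s0 ->
  (forall r2, s0 <= r2 -> 0 <= - Derive U r2 + Mfun h s0 ^ 2 / r2 ^ 3) ->
  (forall w, s0 <= w <= z -> ex_derive (fun s => integrand U g h w s) s0) ->
  is_derive (fun s => Tf U g h s z) s0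
    (- / g s0 + RInt (fun w => Derive (fun s => integrand U g h w s) s0) s0 z).
Proof.
  intros Hs0 Hz HU Hg HM Hex.
  set (c0 := g s0 ^ 2).
  assert (Hc0 : 0 < c0) by (unfold c0; nra).
  assert (HG0 : forall w, s0 <= w -> c0 <= Gf U g h w s0) by (intros; apply Gf_mono; auto).
  assert (HGss : Gf U g h s0 s0 = c0) by (apply Gf_ss; lra).
  set (e := fun s => E0 U g h s).
  set (b := fun s => s ^ 4 * h s ^ 2).
  assert (HGs0 : ex_derive (fun s => Gf U g h s0 s) s0).
  { apply Gf_exd_s. apply Hex; lra. lra. }
  assert (HGz : ex_derive (fun s => Gf U g h z s) s0).
  { apply Gf_exd_s. apply Hex; lra. specialize (HG0 z ltac:(lra)). lra. }
  assert (Hk : / z ^ 2 - / s0 ^ 2 <> 0).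
  { assert (h1 : s0 ^ 2 < z ^ 2) by nra. assert (h2 : 0 < s0 ^ 2) by nra.
    assert (/ z ^ 2 < / s0 ^ 2) by (apply Rinv_lt_contravar; nra). lra. }
  assert (Hbe : forall s, b s = (Gf U g h s0 s - Gf U g h z s + 2 * U s0 - 2 * U z) / (/ z ^ 2 - / s0 ^ 2)).
  { intros s. rewrite !Gf_split by lra. unfold b. field. split. lra. split. lra. nra. }
  assert (Hee : forall s, e s = (Gf U g h s0 s + 2 * U s0 +
             (Gf U g h s0 s - Gf U g h z s + 2 * U s0 - 2 * U z) / (/ z ^ 2 - / s0 ^ 2) / s0 ^ 2) / 2).
  { intros s. rewrite <- Hbe. rewrite Gf_split by lra. unfold b, e. field. lra. }
  assert (Hbd : ex_derive b s0).
  { eapply ex_derive_ext. intros s. symmetry. apply Hbe. auto_derive. auto. }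
  assert (Hed : ex_derive e s0).
  { eapply ex_derive_ext. intros s. symmetry. apply Hee. auto_derive. auto. }
  set (e' := Derive e s0). set (b' := Derive b s0).
  assert (He : is_derive e s0 e') by (apply Derive_correct; auto).
  assert (Hb : is_derive b s0 b') by (apply Derive_correct; auto).
  clearbody e' b'. clear Hbd Hed Hbe Hee HGs0 HGz.
  assert (Hsplit : forall w s, w <> 0 -> Gf U g h w s - Gf U g h w s0 = 2 * (e s - e s0) - (b s - b s0) / w ^ 2).
  { intros w s Hw. rewrite !Gf_split by auto. unfold e, b. field. auto. }
  destruct (ed_deriv e s0 e' He 1 ltac:(lra)) as [de1 [Hde1 Hde1']].
  destruct (ed_deriv b s0 b' Hb 1 ltac:(lra)) as [db1 [Hdb1 Hdb1']].
  set (A := Rabs e' + 1). set (B := Rabs b' + 1).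
  assert (HA : 1 <= A) by (unfold A; pose proof (Rabs_pos e'); lra).
  assert (HB : 1 <= B) by (unfold B; pose proof (Rabs_pos b'); lra).
  set (Cst := 2 * A + 4 * B / s0 ^ 2).
  assert (HCst : 2 <= Cst).
  { unfold Cst. assert (0 <= 4 * B / s0 ^ 2). apply Rle_mult_inv_pos. lra. nra. lra. }
  set (d1 := Rmin de1 db1).
  assert (Hd1 : 0 < d1) by (apply Rmin_pos; auto).
  assert (Hd1e : d1 <= de1) by apply Rmin_l. assert (Hd1b : d1 <= db1) by apply Rmin_r.
  assert (Hinvw : forall w, s0 / 2 <= w -> / w ^ 2 <= 4 / s0 ^ 2).
  { intros w Hw. replace (4 / s0 ^ 2) with (/ ((s0 / 2) ^ 2)) by (field; lra).
    apply Rinv_le_contravar. nra. apply pow_incr. lra. }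
  assert (HGd : forall s w, Rabs (s - s0) < d1 -> s0 / 2 <= w ->
             Rabs (Gf U g h w s - Gf U g h w s0) <= Cst * Rabs (s - s0)).
  { intros s w Hs Hw. rewrite Hsplit by lra.
    assert (Hea : Rabs (e s - e s0) <= A * Rabs (s - s0)).
    { specialize (Hde1' s ltac:(lra)). unfold A.
      replace (e s - e s0) with ((e s - e s0 - e' * (s - s0)) + e' * (s - s0)) by ring.
      eapply Rle_trans. apply Rabs_triang. rewrite Rabs_mult. lra. }
    assert (Hba : Rabs (b s - b s0) <= B * Rabs (s - s0)).
    { specialize (Hdb1' s ltac:(lra)). unfold B.
      replace (b s - b s0) with ((b s - b s0 - b' * (s - s0)) + b' * (s - s0)) by ring.
      eapply Rle_trans. apply Rabs_triang. rewrite Rabs_mult. lra. }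
    specialize (Hinvw w Hw).
    assert (Hw2 : 0 < / w ^ 2) by (apply Rinv_0_lt_compat; nra).
    unfold Rminus at 1. eapply Rle_trans. apply Rabs_triang. rewrite Rabs_Ropp.
    unfold Rdiv. rewrite !Rabs_mult. rewrite (Rabs_right 2) by lra.
    rewrite (Rabs_right (/ w ^ 2)) by lra. unfold Cst.
    assert (Rabs (b s - b s0) * / w ^ 2 <= B * Rabs (s - s0) * (4 / s0 ^ 2)).
    { apply Rmult_le_compat; auto. apply Rabs_pos. lra. }
    assert (0 <= Rabs (s - s0)) by apply Rabs_pos.
    unfold Rdiv in *. nra. }
  assert (Gjoint : forall eps, 0 < eps -> exists d, 0 < d /\ forall s w, Rabs (s - s0) < d ->
             Rabs (w - s0) < d -> Rabs (Gf U g h w s - Gf U g h s0 s0) < eps).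
  { intros eps Heps.
    destruct (cont_ed (fun w => Gf U g h w s0) s0 (Gf_cont_w U g h s0 s0 Hs0 HU) (eps / 2) ltac:(lra))
      as [dw [Hdw Hdw']].
    set (d := Rmin d1 (Rmin (s0 / 2) (Rmin dw (eps / (2 * Cst))))).
    assert (Hd : 0 < d).
    { unfold d. repeat apply Rmin_pos; try lra. apply Rdiv_lt_0_compat; lra. }
    assert (Hdd1 : d <= d1) by apply Rmin_l.
    assert (Hdd2 : d <= s0 / 2) by (unfold d; eapply Rle_trans; [apply Rmin_r|apply Rmin_l]).
    assert (Hdd3 : d <= dw) by (unfold d; eapply Rle_trans; [apply Rmin_r|]; eapply Rle_trans; [apply Rmin_r|apply Rmin_l]).
    assert (Hdd4 : d <= eps / (2 * Cst)) by (unfold d; eapply Rle_trans; [apply Rmin_r|]; eapply Rle_trans; [apply Rmin_r|apply Rmin_r]).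
    exists d. split; auto. intros s w Hs Hw.
    assert (Hw' : s0 / 2 <= w) by (apply Rabs_def2 in Hw; lra).
    specialize (HGd s w ltac:(lra) Hw'). specialize (Hdw' w ltac:(lra)). simpl in Hdw'.
    replace (Gf U g h w s - Gf U g h s0 s0) with
      ((Gf U g h w s - Gf U g h w s0) + (Gf U g h w s0 - Gf U g h s0 s0)) by ring.
    eapply Rle_lt_trans. apply Rabs_triang.
    assert (Cst * Rabs (s - s0) < eps / 2).
    { apply Rlt_le_trans with (Cst * d). apply Rmult_lt_compat_l; lra.
      apply Rle_trans with (Cst * (eps / (2 * Cst))). apply Rmult_le_compat_l; lra.
      right. field. lra. }
    lra. }
  assert (LB : exists dL, 0 < dL /\ forall s, Rabs (s - s0) < dL -> forall w, Rmin s s0 <= w <= z ->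
             0 < w /\ c0 / 2 <= Gf U g h w s).
  { destruct (Gjoint (c0 / 2) ltac:(lra)) as [dJ [HdJ HdJ']].
    set (d := Rmin dJ (Rmin d1 (Rmin (s0 / 2) (c0 / (2 * Cst))))).
    assert (Hd : 0 < d).
    { unfold d. repeat apply Rmin_pos; try lra. apply Rdiv_lt_0_compat; lra. }
    assert (Hdd1 : d <= dJ) by apply Rmin_l.
    assert (Hdd2 : d <= d1) by (unfold d; eapply Rle_trans; [apply Rmin_r|apply Rmin_l]).
    assert (Hdd3 : d <= s0 / 2) by (unfold d; eapply Rle_trans; [apply Rmin_r|]; eapply Rle_trans; [apply Rmin_r|apply Rmin_l]).
    assert (Hdd4 : d <= c0 / (2 * Cst)) by (unfold d; eapply Rle_trans; [apply Rmin_r|]; eapply Rle_trans; [apply Rmin_r|apply Rmin_r]).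
    exists d. split; auto. intros s Hs w Hw.
    pose proof (Rabs_def2 _ _ Hs) as Hs'.
    destruct (Rle_or_lt s0 w) as [Hw0|Hw0].
    - split. lra.
      specialize (HGd s w ltac:(lra) ltac:(lra)). specialize (HG0 w Hw0).
      assert (Cst * Rabs (s - s0) <= c0 / 2).
      { apply Rle_trans with (Cst * d). apply Rmult_le_compat_l; lra.
        apply Rle_trans with (Cst * (c0 / (2 * Cst))). apply Rmult_le_compat_l; lra.
        right. field. lra. }
      apply Rabs_le_between in HGd. lra.
    - assert (Hsw : s <= w).
      { destruct (Rle_or_lt s s0). rewrite Rmin_left in Hw by lra. lra.
        rewrite Rmin_right in Hw by lra. lra. }
      split. lra.
      specialize (HdJ' s w ltac:(lra) ltac:(rewrite Rabs_left; lra)).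
      apply Rabs_def2 in HdJ'. lra. }
  destruct LB as [dL [HdL HdL']].
  set (D := fun w => - / 2 * psiG U g h s0 w ^ 3 * (2 * e' - b' / w ^ 2)).
  assert (HDd : forall w, s0 <= w <= z -> is_derive (fun s => integrand U g h w s) s0 (D w)).
  { intros w Hw.
    assert (HGw : 0 < Gf U g h w s0) by (specialize (HG0 w ltac:(lra)); lra).
    assert (Hgd : is_derive (fun s => Gf U g h w s) s0 (2 * e' - b' / w ^ 2)).
    { apply (dext (fun s => 2 * e s - 2 * U w - / w ^ 2 * b s)).
      intros s. rewrite Gf_split by lra. unfold e, b. field. lra.
      eapply deq. apply dsub. apply dsub. apply (is_derive_scal e). exact He. apply dconst.
      apply (is_derive_scal b). exact Hb. field. lra. }
    unfold integrand. fold (Gf U g h w s0).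
    eapply deq. apply (dcomp (fun x => / sqrt x) (fun s => Gf U g h w s)).
    apply psi_deriv. exact HGw. exact Hgd.
    unfold D, psiG. ring. }
  assert (HDc : forall w, s0 <= w <= z -> continuous D w).
  { intros w Hw. apply exd_cont. unfold D. auto_derive. repeat split; try lra.
    apply exd_psiG_w; auto. lra. specialize (HG0 w ltac:(lra)). lra.
    apply Rgt_not_eq. nra. }
  assert (Hleib := leib (fun w s => integrand U g h w s) D s0 z Hz).
  simpl in Hleib.
  eapply deq. apply Hleib.
  - exists dL. split; auto. intros s Hs w Hw. destruct (HdL' s Hs w Hw) as [Hw1 Hw2].
    apply integrand_cont; auto. lra.
  - intros eps Heps.
    assert (HGp : 0 < Gf U g h s0 s0) by lra.
    destruct (cont_ed (fun x => / sqrt x) (Gf U g h s0 s0) (psi_cont _ HGp) eps Heps) as [eta [Heta Heta']].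
    destruct (Gjoint eta Heta) as [d [Hd Hd']].
    exists d. split; auto. intros s w Hs Hw.
    apply (Heta' (Gf U g h w s)). apply Hd'; auto.
  - intros eps Heps.
    set (c := c0 / 2). assert (Hc : 0 < c) by (unfold c; lra).
    assert (Hsc : 0 < sqrt c) by (apply sqrt_lt_R0; lra).
    set (Pc := / sqrt c). assert (HPc : 0 < Pc) by (apply Rinv_0_lt_compat; lra).
    set (K2 := 2 + 4 / s0 ^ 2).
    assert (HK2 : 0 < K2) by (unfold K2; assert (0 < 4 / s0 ^ 2) by (apply Rdiv_lt_0_compat; nra); lra).
    set (eta := eps / (Pc ^ 3 * K2)).
    assert (Heta : 0 < eta) by (unfold eta; apply Rdiv_lt_0_compat; auto; apply Rmult_lt_0_compat; auto; apply pow_lt; auto).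
    destruct (ed_deriv e s0 e' He eta Heta) as [de [Hde Hde']].
    destruct (ed_deriv b s0 b' Hb eta Heta) as [db [Hdb Hdb']].
    assert (Hsc5 : 0 < sqrt c ^ 5) by (apply pow_lt; auto).
    set (dq := eps * sqrt c ^ 5 / (2 * Cst ^ 2)).
    assert (Hdq : 0 < dq) by (unfold dq; apply Rdiv_lt_0_compat; nra).
    set (d := Rmin dL (Rmin d1 (Rmin de (Rmin db dq)))).
    assert (Hd : 0 < d) by (unfold d; repeat apply Rmin_pos; auto).
    assert (HdL0 : d <= dL) by apply Rmin_l.
    assert (Hd10 : d <= d1) by (unfold d; eapply Rle_trans; [apply Rmin_r|apply Rmin_l]).
    assert (Hde0 : d <= de) by (unfold d; eapply Rle_trans; [apply Rmin_r|]; eapply Rle_trans; [apply Rmin_r|apply Rmin_l]).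
    assert (Hdb0 : d <= db) by (unfold d; eapply Rle_trans; [apply Rmin_r|]; eapply Rle_trans; [apply Rmin_r|]; eapply Rle_trans; [apply Rmin_r|apply Rmin_l]).
    assert (Hdq0 : d <= dq) by (unfold d; eapply Rle_trans; [apply Rmin_r|]; eapply Rle_trans; [apply Rmin_r|]; eapply Rle_trans; [apply Rmin_r|apply Rmin_r]).
    exists d. split; auto. intros s Hs w Hw.
    set (x := Gf U g h w s). set (x0 := Gf U g h w s0). set (dl := s - s0).
    assert (Hx : c <= x).
    { destruct (HdL' s ltac:(lra) w) as [_ H]. split; [|lra]. eapply Rle_trans. apply Rmin_r. lra. exact H. }
    assert (Hx0 : c <= x0) by (specialize (HG0 w ltac:(lra)); unfold c, x0; lra).
    pose proof (psi2x x x0 c Hc Hx Hx0) as HT1.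
    assert (Hxx0 : Rabs (x - x0) <= Cst * Rabs dl) by (apply HGd; lra).
    assert (HT2 : Rabs ((x - x0) - dl * (2 * e' - b' / w ^ 2)) <= eta * Rabs dl * K2).
    { unfold x, x0. rewrite Hsplit by lra.
      replace (2 * (e s - e s0) - (b s - b s0) / w ^ 2 - dl * (2 * e' - b' / w ^ 2))
        with (2 * (e s - e s0 - e' * (s - s0)) - (b s - b s0 - b' * (s - s0)) * / w ^ 2)
        by (unfold dl; field; lra).
      specialize (Hde' s ltac:(lra)). specialize (Hdb' s ltac:(lra)).
      specialize (Hinvw w ltac:(lra)).
      assert (Hw2 : 0 < / w ^ 2) by (apply Rinv_0_lt_compat; nra).
      unfold Rminus at 1. eapply Rle_trans. apply Rabs_triang. rewrite Rabs_Ropp.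
      rewrite !Rabs_mult. rewrite (Rabs_right 2) by lra. rewrite (Rabs_right (/ w ^ 2)) by lra.
      assert (Rabs (b s - b s0 - b' * (s - s0)) * / w ^ 2 <= eta * Rabs (s - s0) * (4 / s0 ^ 2)).
      { apply Rmult_le_compat; auto. apply Rabs_pos. lra. }
      unfold K2, dl. nra. }
    assert (Hpsi : / sqrt x0 <= Pc).
    { unfold Pc. apply Rinv_le_contravar. auto. apply sqrt_le_1_alt. auto. }
    assert (Hpsi0 : 0 < / sqrt x0) by (apply Rinv_0_lt_compat, sqrt_lt_R0; lra).
    change (integrand U g h w s) with (/ sqrt x). change (integrand U g h w s0) with (/ sqrt x0).
    fold dl.
    replace (/ sqrt x - / sqrt x0 - dl * D w) with
      ((/ sqrt x - / sqrt x0 + / 2 * (/ sqrt x0) ^ 3 * (x - x0))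
        - / 2 * (/ sqrt x0) ^ 3 * ((x - x0) - dl * (2 * e' - b' / w ^ 2)))
      by (unfold D, psiG; fold x0; ring).
    unfold Rminus at 1. eapply Rle_trans. apply Rabs_triang. rewrite Rabs_Ropp.
    assert (HA1 : (x - x0) ^ 2 / sqrt c ^ 5 <= eps / 2 * Rabs dl).
    { assert (Habs : 0 <= Rabs dl) by apply Rabs_pos.
      assert (Hdl : Rabs dl < dq) by (unfold dl; lra).
      assert ((x - x0) ^ 2 <= Cst ^ 2 * Rabs dl ^ 2).
      { rewrite <- (pow2_abs (x - x0)). pose proof (Rabs_pos (x - x0)).
        replace (Cst ^ 2 * Rabs dl ^ 2) with ((Cst * Rabs dl) ^ 2) by ring.
        apply pow_incr. lra. }
      unfold Rdiv. apply Rle_trans with (Cst ^ 2 * Rabs dl ^ 2 * / sqrt c ^ 5).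
      apply Rmult_le_compat_r. left; apply Rinv_0_lt_compat; auto. auto.
      apply Rle_trans with (Cst ^ 2 * Rabs dl * dq * / sqrt c ^ 5).
      apply Rmult_le_compat_r. left; apply Rinv_0_lt_compat; auto.
      replace (Cst ^ 2 * Rabs dl ^ 2) with (Cst ^ 2 * Rabs dl * Rabs dl) by ring.
      apply Rmult_le_compat_l. nra. lra.
      right. unfold dq. field. split; lra. }
    assert (HA2 : Rabs (/ 2 * (/ sqrt x0) ^ 3 * ((x - x0) - dl * (2 * e' - b' / w ^ 2)))
                  <= eps / 2 * Rabs dl).
    { rewrite !Rabs_mult. rewrite (Rabs_right (/ 2)) by lra.
      rewrite (Rabs_right ((/ sqrt x0) ^ 3)) by (apply Rle_ge, pow_le; lra).
      apply Rle_trans with (/ 2 * Pc ^ 3 * (eta * Rabs dl * K2)).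
      apply Rmult_le_compat. apply Rmult_le_pos; [lra|apply pow_le; lra]. apply Rabs_pos.
      apply Rmult_le_compat_l. lra. apply pow_incr. lra. auto.
      right. unfold eta. field. split; apply Rgt_not_eq; try apply pow_lt; auto. }
    lra.
  - exact HDc.
  - change (integrand U g h s0 s0) with (/ sqrt (Gf U g h s0 s0)).
    rewrite HGss. unfold c0. rewrite sqrt_pow2 by lra. f_equal.
    apply (@RInt_ext R_CompleteNormedModule). intros x Hx.
    rewrite Rmin_left in Hx by lra. rewrite Rmax_right in Hx by lra.
    symmetry. apply is_derive_unique. apply HDd. lra.
Qed.

Lemma enorm_triang (a1 a2 b1 b2 : R) :
  enorm (a1 + b1, a2 + b2) <= enorm (a1, a2) + enorm (b1, b2).
Proof.
  unfold enorm; cbn [fst snd].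
  set (na := sqrt (a1 ^ 2 + a2 ^ 2)). set (nb := sqrt (b1 ^ 2 + b2 ^ 2)).
  assert (Hna : na ^ 2 = a1 ^ 2 + a2 ^ 2) by (apply pow2_sqrt; nra).
  assert (Hnb : nb ^ 2 = b1 ^ 2 + b2 ^ 2) by (apply pow2_sqrt; nra).
  assert (Hna0 : 0 <= na) by apply sqrt_pos. assert (Hnb0 : 0 <= nb) by apply sqrt_pos.
  assert (HCS : a1 * b1 + a2 * b2 <= na * nb).
  { assert ((a1 * b1 + a2 * b2) ^ 2 <= (na * nb) ^ 2).
    { replace ((na * nb) ^ 2) with (na ^ 2 * nb ^ 2) by ring. rewrite Hna, Hnb.
      assert (0 <= (a1 * b2 - a2 * b1) ^ 2) by apply pow2_ge_0. nra. }
    assert (0 <= na * nb) by nra.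
    destruct (Rle_or_lt (a1 * b1 + a2 * b2) (na * nb)); auto. nra. }
  rewrite <- (sqrt_pow2 (na + nb)) by lra. apply sqrt_le_1_alt. nra.
Qed.

Lemma enorm_le_abs (d1 d2 : R) : enorm (d1, d2) <= Rabs d1 + Rabs d2.
Proof.
  unfold enorm; cbn [fst snd].
  pose proof (Rabs_pos d1). pose proof (Rabs_pos d2).
  rewrite <- (sqrt_pow2 (Rabs d1 + Rabs d2)) by lra. apply sqrt_le_1_alt.
  rewrite <- (pow2_abs d1) at 1. rewrite <- (pow2_abs d2) at 1. nra.
Qed.

Lemma enorm_diff (p q : pt) : enorm q <= enorm p + enorm (fst q - fst p, snd q - snd p).
Proof.
  destruct p as [p1 p2]; destruct q as [q1 q2]; cbn [fst snd].
  pose proof (enorm_triang p1 p2 (q1 - p1) (q2 - p2)).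
  replace (p1 + (q1 - p1)) with q1 in H by ring. replace (p2 + (q2 - p2)) with q2 in H by ring.
  exact H.
Qed.

Lemma enorm_sym (a b : R) : enorm (a, b) = enorm (- a, - b).
Proof. unfold enorm; cbn [fst snd]. f_equal. ring. Qed.

Lemma radii_interval (L : pt -> Prop) : admissible_domain L ->
  forall x1 x2, L x1 -> L x2 -> forall rho, enorm x1 < rho < enorm x2 ->
  exists p, L p /\ enorm p = rho.
Proof.
  intros [[O [HO [Hc HLO]]] _] x1 x2 H1 H2 rho Hr.
  apply NNPP. intros Hno.
  assert (Hno' : forall p, O p -> enorm p <> rho).
  { intros p Hp He. apply Hno. exists p. split; auto. apply HLO.
    intros eps Heps. exists p. split; auto. unfold enorm; cbn [fst snd].
    rewrite !Rminus_diag. replace (0 ^ 2 + 0 ^ 2) with 0 by ring. rewrite sqrt_0. lra. }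
  apply Hc. exists (fun p => enorm p < rho), (fun p => rho < enorm p).
  split; [|split; [|split; [|split; [|split]]]].
  - intros p Hp. assert (He : 0 < (rho - enorm p) / 2) by lra.
    exists (mkposreal _ He). intros q [Hq1 Hq2].
    assert (Hq1' : Rabs (fst q - fst p) < (rho - enorm p) / 2) by exact Hq1.
    assert (Hq2' : Rabs (snd q - snd p) < (rho - enorm p) / 2) by exact Hq2.
    destruct p as [p1 p2]; destruct q as [q1 q2]; cbn [fst snd] in *.
    pose proof (enorm_diff (p1, p2) (q1, q2)). pose proof (enorm_le_abs (q1 - p1) (q2 - p2)).
    cbn [fst snd] in *. lra.
  - intros p Hp. assert (He : 0 < (enorm p - rho) / 2) by lra.
    exists (mkposreal _ He). intros q [Hq1 Hq2].
    assert (Hq1' : Rabs (fst q - fst p) < (enorm p - rho) / 2) by exact Hq1.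
    assert (Hq2' : Rabs (snd q - snd p) < (enorm p - rho) / 2) by exact Hq2.
    destruct p as [p1 p2]; destruct q as [q1 q2]; cbn [fst snd] in *.
    pose proof (enorm_diff (q1, q2) (p1, p2)). pose proof (enorm_le_abs (p1 - q1) (p2 - q2)).
    cbn [fst snd] in *. rewrite Rabs_minus_sym in Hq1', Hq2'. lra.
  - intros x Hx. specialize (Hno' x Hx). destruct (Rtotal_order (enorm x) rho) as [|[|]]; auto. tauto.
  - destruct (proj1 (HLO x1) H1 (rho - enorm x1) ltac:(lra)) as [y [Hy1 Hy2]].
    exists y. split; auto. pose proof (enorm_diff x1 y). lra.
  - destruct (proj1 (HLO x2) H2 (enorm x2 - rho) ltac:(lra)) as [y [Hy1 Hy2]].
    exists y. split; auto. pose proof (enorm_diff y x2).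
    rewrite enorm_sym in Hy2. replace (- (fst y - fst x2)) with (fst x2 - fst y) in Hy2 by ring.
    replace (- (snd y - snd x2)) with (snd x2 - snd y) in Hy2 by ring. lra.
  - intros x [_ [Ha Hb]]. lra.
Qed.

Lemma Tf_lt (U g h : R -> R) (s : R) : 0 < s -> (forall r, 0 < r -> ex_derive U r) -> 0 < g s ->
  (forall r2, s <= r2 -> 0 <= - Derive U r2 + Mfun h s ^ 2 / r2 ^ 3) ->
  forall z1 z2, s <= z1 -> z1 < z2 -> Tf U g h s z1 < Tf U g h s z2.
Proof.
  intros Hs HU Hg HM z1 z2 Hz1 Hz2.
  destruct (RInt_deriv_near U g h s Hs HU Hg HM) as [d [Hd Hd']].
  destruct (MVT_gen (fun z => Tf U g h s z) z1 z2 (fun c => integrand U g h c s)) as [c [Hc1 Hc2]].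
  - intros x Hx. rewrite Rmin_left in Hx by lra. rewrite Rmax_right in Hx by lra. apply Hd'. lra.
  - intros x Hx. rewrite Rmin_left in Hx by lra. rewrite Rmax_right in Hx by lra.
    apply continuity_pt_filterlim. eapply deriv_cont. apply Hd'. lra.
  - rewrite Rmin_left in Hc1 by lra. rewrite Rmax_right in Hc1 by lra.
    pose proof (Gf_mono U g h s Hs HU HM c ltac:(lra)).
    assert (0 < integrand U g h c s).
    { unfold integrand. apply Rinv_0_lt_compat, sqrt_lt_R0. fold (Gf U g h c s). nra. }
    nra.
Qed.

Lemma Tf_inj (U g h : R -> R) (s : R) : 0 < s -> (forall r, 0 < r -> ex_derive U r) -> 0 < g s ->
  (forall r2, s <= r2 -> 0 <= - Derive U r2 + Mfun h s ^ 2 / r2 ^ 3) ->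
  forall z1 z2, s <= z1 -> s <= z2 -> Tf U g h s z1 = Tf U g h s z2 -> z1 = z2.
Proof.
  intros Hs HU Hg HM z1 z2 H1 H2 He.
  destruct (Rtotal_order z1 z2) as [Hl|[Heq|Hl]]; auto.
  - pose proof (Tf_lt U g h s Hs HU Hg HM z1 z2 H1 Hl). lra.
  - pose proof (Tf_lt U g h s Hs HU Hg HM z2 z1 H2 Hl). lra.
Qed.

Lemma same_radius (U g h : R -> R) (x1 x2 : pt) (Y1 V1 Y2 V2 : R -> pt) :
  (forall r, 0 < r -> ex_derive U r) ->
  solves_newton U Y1 V1 x1 -> solves_newton U Y2 V2 x2 ->
  radial_vel x1 (V1 0) = g (enorm x1) -> angular_vel x1 (V1 0) = h (enorm x1) ->
  radial_vel x2 (V2 0) = g (enorm x2) -> angular_vel x2 (V2 0) = h (enorm x2) ->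
  enorm x1 = enorm x2 -> 0 < g (enorm x1) ->
  (forall r2, enorm x1 <= r2 -> 0 <= - Derive U r2 + Mfun h (enorm x1) ^ 2 / r2 ^ 3) ->
  forall t, 0 <= t -> Y1 t = Y2 t -> x1 = x2.
Proof.
  intros HU Hs1 Hs2 Hr1 Ha1 Hr2 Ha2 Hx Hg HM t Ht Hcol.
  rewrite <- Hx in Hr2, Ha2.
  assert (Hg2 : 0 < g (enorm x2)) by (rewrite <- Hx; auto).
  assert (HM2 : forall r2, enorm x2 <= r2 -> 0 <= - Derive U r2 + Mfun h (enorm x2) ^ 2 / r2 ^ 3)
    by (rewrite <- Hx; auto).
  destruct (particle_time U g h x1 Y1 V1 HU Hs1 Hr1 Hg Ha1 HM) as [Hgt1 [Hrho1 HT1]].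
  destruct (particle_time U g h x2 Y2 V2 HU Hs2 ltac:(rewrite <- Hx; auto) Hg2 ltac:(rewrite <- Hx; auto) HM2)
    as [Hgt2 [Hrho2 HT2]].
  pose proof (particle_rho_sq U g h x1 Y1 V1 HU Hs1 Hr1 Ha1) as Hm1.
  pose proof (particle_rho_sq U g h x2 Y2 V2 HU Hs2 ltac:(rewrite <- Hx; auto) ltac:(rewrite <- Hx; auto)) as Hm2.
  rewrite <- Hx in Hgt2, Hrho2, HT2, Hm2.
  set (s := enorm x1) in *.
  assert (Hs : 0 < s).
  { destruct Hs1 as [HY0 [Hnz _]]. unfold s; rewrite <- HY0; apply enorm_pos; apply Hnz; lra. }
  assert (Hreq : forall tau, 0 <= tau -> enorm (Y1 tau) = enorm (Y2 tau)).
  { intros tau Htau. apply (Tf_inj U g h s Hs HU Hg HM).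
    - destruct (Req_dec tau 0) as [->|Hn]. destruct Hs1 as [HY0 _]. rewrite HY0. unfold s in *; lra.
      left. apply Hgt1. lra.
    - destruct (Req_dec tau 0) as [->|Hn]. destruct Hs2 as [HY0 _]. rewrite HY0. unfold s in *; lra.
      left. apply Hgt2. lra.
    - rewrite HT1, HT2; auto. }
  pose proof Hs1 as [HY10 [Hnz1 [Hder1 [HcY1 HcV1]]]].
  pose proof Hs2 as [HY20 [Hnz2 [Hder2 [HcY2 HcV2]]]].
  set (N := fun tau => fst (Y1 tau) * fst (Y2 tau) + snd (Y1 tau) * snd (Y2 tau)).
  set (Q := fun tau => fst (Y1 tau) ^ 2 + snd (Y1 tau) ^ 2).
  assert (HQp : forall tau, 0 <= tau -> 0 < Q tau) by (intros; apply q_pos; apply Hnz1; auto).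
  assert (HQ2 : forall tau, 0 <= tau -> Q tau = fst (Y2 tau) ^ 2 + snd (Y2 tau) ^ 2).
  { intros tau Htau. unfold Q. rewrite <- !enorm_sq. rewrite Hreq; auto. }
  assert (Hconst : forall tau, 0 <= tau -> N tau / Q tau = N 0 / Q 0).
  { apply (const0 (fun tau => N tau / Q tau) (fun _ => 0)); [| auto |].
    - intros u Hu. destruct (Hder1 u Hu) as [D1 D2]. destruct (Hder2 u Hu) as [E1 E2].
      eapply deq. apply is_derive_div.
      + unfold N. apply dadd; apply dmul.
        apply (dfst _ _ _ D1). apply (dfst _ _ _ E1). apply (dsnd _ _ _ D1). apply (dsnd _ _ _ E1).
      + unfold Q. apply dadd; apply is_derive_pow. apply (dfst _ _ _ D1). apply (dsnd _ _ _ D1).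
      + apply Rgt_not_eq, HQp; lra.
      + destruct (Hm1 u ltac:(lra)) as [M1 _]. destruct (Hm2 u ltac:(lra)) as [M2 _].
        pose proof (Hrho1 u ltac:(lra)) as R1. pose proof (Hrho2 u ltac:(lra)) as R2.
        rewrite <- (Hreq u) in R2 by lra.
        pose proof (HQ2 u ltac:(lra)) as Q2. pose proof (HQp u ltac:(lra)) as Qp.
        unfold N, Q in *. simpl.
        set (a1 := fst (Y1 u)) in *. set (a2 := snd (Y1 u)) in *.
        set (b1 := fst (Y2 u)) in *. set (b2 := snd (Y2 u)) in *.
        set (p1 := fst (V1 u)) in *. set (p2 := snd (V1 u)) in *.
        set (w1 := fst (V2 u)) in *. set (w2 := snd (V2 u)) in *.
        set (rh := enorm (Y1 u) * sqrt (Gf U g h (enorm (Y1 u)) s)) in *.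
        set (M := Mfun h s) in *.
        assert (E1' : (a1 ^ 2 + a2 ^ 2) * p1 = rh * a1 - M * a2) by (rewrite <- R1, <- M1; ring).
        assert (E2' : (a1 ^ 2 + a2 ^ 2) * p2 = rh * a2 + M * a1) by (rewrite <- R1, <- M1; ring).
        assert (E3' : (a1 ^ 2 + a2 ^ 2) * w1 = rh * b1 - M * b2) by (rewrite Q2, <- R2, <- M2; ring).
        assert (E4' : (a1 ^ 2 + a2 ^ 2) * w2 = rh * b2 + M * b1) by (rewrite Q2, <- R2, <- M2; ring).
        match goal with |- ?X / _ = 0 => assert (HX : X = 0) end.
        { transitivity (b1 * ((a1^2+a2^2)*p1 - (rh*a1 - M*a2)) + b2*((a1^2+a2^2)*p2 - (rh*a2 + M*a1))
            + a1*((a1^2+a2^2)*w1 - (rh*b1 - M*b2)) + a2*((a1^2+a2^2)*w2 - (rh*b2 + M*b1))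
            + 2*(a1*b1+a2*b2)*(rh - (a1*p1 + a2*p2))). ring.
          rewrite E1', E2', E3', E4'. rewrite R1. ring. }
        rewrite HX. unfold Rdiv. ring.
    - apply (lext _ (fun tau => N tau * / Q tau) _ (N 0 * / Q 0)); [auto|intros; reflexivity|reflexivity|].
      apply lmul; auto.
      + unfold N. apply ladd; auto; apply lmul; auto.
        apply lfst; auto. apply lfst; auto. apply lsnd; auto. apply lsnd; auto.
      + apply (lcomp _ Q Rinv); auto.
        unfold Q. apply ladd; auto; apply lsq; auto. apply lfst; auto. apply lsnd; auto.
        apply continuous_Rinv. apply Rgt_not_eq, HQp. lra. }
  specialize (Hconst t Ht).
  assert (HNt : N t = Q t) by (unfold N, Q; rewrite Hcol; ring).
  rewrite HNt in Hconst. rewrite Rdiv_diag in Hconst by (apply Rgt_not_eq, HQp; auto).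
  assert (HQ0 := HQp 0 ltac:(lra)).
  assert (HN0 : N 0 = Q 0).
  { apply Rmult_eq_reg_r with (/ Q 0). rewrite Rinv_r by lra. symmetry. exact Hconst.
    apply Rgt_not_eq, Rinv_0_lt_compat; auto. }
  pose proof (HQ2 0 ltac:(lra)) as HQ20.
  unfold N, Q in HN0, HQ20. rewrite HY10, HY20 in HN0, HQ20.
  destruct x1 as [a1 a2]; destruct x2 as [b1 b2]; cbn [fst snd] in *.
  assert (Hz : (a1 - b1) ^ 2 + (a2 - b2) ^ 2 = 0) by nra.
  pose proof (pow2_ge_0 (a1 - b1)). pose proof (pow2_ge_0 (a2 - b2)).
  assert (h1 : (a1 - b1) ^ 2 = 0) by lra. assert (h2 : (a2 - b2) ^ 2 = 0) by lra.
  assert (a1 - b1 = 0) by (destruct (Req_dec (a1 - b1) 0); auto; exfalso; apply (pow_nonzero (a1 - b1) 2); auto).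
  assert (a2 - b2 = 0) by (destruct (Req_dec (a2 - b2) 0); auto; exfalso; apply (pow_nonzero (a2 - b2) 2); auto).
  f_equal; lra.
Qed.

Lemma T_decr (U g h : R -> R) (R1 R2 : R) :
  0 < R1 -> (forall r, 0 < r -> ex_derive U r) ->
  (forall r1 r2, R1 < r1 -> r1 <= r2 -> 0 <= - Derive U r2 + Mfun h r1 ^ 2 / r2 ^ 3) ->
  (forall r1 r2, R1 < r1 < R2 -> r1 < r2 ->
          (forall z, r1 <= z <= r2 -> ex_derive (fun s => integrand U g h z s) r1) /\
          ex_RInt (fun z => Derive (fun s => integrand U g h z s) r1) r1 r2 /\
          RInt (fun z => Derive (fun s => integrand U g h z s) r1) r1 r2 < / g r1) ->
  forall s1 s2 z, R1 < s1 -> s1 < s2 -> s2 < z -> s2 < R2 ->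
  (forall s, s1 <= s <= s2 -> 0 < g s) ->
  Tf U g h s2 z < Tf U g h s1 z.
Proof.
  intros HR1 HU HM Hint s1 s2 z Hs1 Hs12 Hs2z Hs2R Hg.
  set (df := fun s => - / g s + RInt (fun w => Derive (fun s' => integrand U g h w s') s) s z).
  assert (Hd : forall s, s1 <= s <= s2 -> is_derive (fun s => Tf U g h s z) s (df s)).
  { intros s Hs. apply T_deriv; try lra.
    - auto.
    - apply Hg; lra.
    - intros r2 Hr2. apply HM; lra.
    - destruct (Hint s z ltac:(lra) ltac:(lra)) as [H _]. exact H. }
  destruct (MVT_gen (fun s => Tf U g h s z) s1 s2 df) as [c [Hc1 Hc2]].
  - intros x Hx. rewrite Rmin_left in Hx by lra. rewrite Rmax_right in Hx by lra. exact (Hd x ltac:(lra)).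
  - intros x Hx. rewrite Rmin_left in Hx by lra. rewrite Rmax_right in Hx by lra.
    apply continuity_pt_filterlim. apply (deriv_cont (fun s => Tf U g h s z) x (df x)). exact (Hd x ltac:(lra)).
  - rewrite Rmin_left in Hc1 by lra. rewrite Rmax_right in Hc1 by lra.
    assert (df c < 0).
    { unfold df. destruct (Hint c z ltac:(lra) ltac:(lra)) as [_ [_ H]]. lra. }
    nra.
Qed.

Theorem theorem7
  (L : pt -> Prop) (R1 R2 : R) (U g h : R -> R) (y vel : R -> pt -> pt)
  (HR : 0 < R1 < R2)
  (HLdom : admissible_domain L)
  (HLbd : bounded2 L)
  (HL0 : ~ L (0, 0))
  (HLann : forall x, L x -> R1 < enorm x < R2)
  (HU : smooth_pos U)
  (Hsol : forall x, L x -> solves_newton U (fun t => y t x) (fun t => vel t x) x)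
  (Hdr : forall x, L x -> radial_vel x (vel 0 x) = g (enorm x))
  (Hg : forall x, L x -> 0 < g (enorm x))
  (Hdphi : forall x, L x -> angular_vel x (vel 0 x) = h (enorm x))
  (HM : forall r1 r2, R1 < r1 -> r1 <= r2 ->
          0 <= - Derive U r2 + Mfun h r1 ^ 2 / r2 ^ 3)
  (Hint : forall r1 r2, R1 < r1 < R2 -> r1 < r2 ->
          (forall z, r1 <= z <= r2 -> ex_derive (fun s => integrand U g h z s) r1) /\
          ex_RInt (fun z => Derive (fun s => integrand U g h z s) r1) r1 r2 /\
          RInt (fun z => Derive (fun s => integrand U g h z s) r1) r1 r2 < / g r1) :
  forall t x1 x2, 0 <= t -> L x1 -> L x2 -> x1 <> x2 -> y t x1 <> y t x2.
Proof.
  intros t x1 x2 Ht Hx1 Hx2 Hne Hcol.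
  assert (HU1 : forall r, 0 < r -> ex_derive U r) by (intros r Hr; exact (HU 1%nat r Hr)).
  pose proof (HLann x1 Hx1) as Ha1. pose proof (HLann x2 Hx2) as Ha2.
  pose proof (Hsol x1 Hx1) as S1. pose proof (Hsol x2 Hx2) as S2.
  assert (HM1 : forall r2, enorm x1 <= r2 -> 0 <= - Derive U r2 + Mfun h (enorm x1) ^ 2 / r2 ^ 3)
    by (intros; apply HM; lra).
  assert (HM2 : forall r2, enorm x2 <= r2 -> 0 <= - Derive U r2 + Mfun h (enorm x2) ^ 2 / r2 ^ 3)
    by (intros; apply HM; lra).
  destruct (Req_dec t 0) as [->|Htn].
  { destruct S1 as [H1 _]. destruct S2 as [H2 _]. simpl in H1, H2. apply Hne. congruence. }
  destruct (particle_time U g h x1 _ _ HU1 S1 (Hdr x1 Hx1) (Hg x1 Hx1) (Hdphi x1 Hx1) HM1)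
    as [Hgt1 [_ HT1]].
  destruct (particle_time U g h x2 _ _ HU1 S2 (Hdr x2 Hx2) (Hg x2 Hx2) (Hdphi x2 Hx2) HM2)
    as [Hgt2 [_ HT2]].
  specialize (Hgt1 t ltac:(lra)). specialize (Hgt2 t ltac:(lra)).
  specialize (HT1 t Ht). specialize (HT2 t Ht). simpl in *.
  rewrite Hcol in Hgt1, HT1.
  set (z := enorm (y t x2)) in *.
  assert (Hgpos : forall a b, L a -> L b -> enorm a < enorm b ->
            forall s, enorm a <= s <= enorm b -> 0 < g s).
  { intros a b Ha Hb Hab s Hs.
    destruct (Req_dec s (enorm a)) as [->|Hna]. apply Hg; auto.
    destruct (Req_dec s (enorm b)) as [->|Hnb]. apply Hg; auto.
    destruct (radii_interval L HLdom a b Ha Hb s ltac:(lra)) as [p [Hp Hps]].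
    rewrite <- Hps. apply Hg; auto. }
  destruct (Rtotal_order (enorm x1) (enorm x2)) as [Hl|[He|Hl]].
  - pose proof (T_decr U g h R1 R2 (proj1 HR) HU1 HM Hint (enorm x1) (enorm x2) z
       ltac:(lra) Hl Hgt2 ltac:(lra) (Hgpos x1 x2 Hx1 Hx2 Hl)). lra.
  - apply Hne. apply (same_radius U g h x1 x2 _ _ _ _ HU1 S1 S2 (Hdr x1 Hx1) (Hdphi x1 Hx1)
      (Hdr x2 Hx2) (Hdphi x2 Hx2) He (Hg x1 Hx1) HM1 t Ht). simpl. exact Hcol.
  - pose proof (T_decr U g h R1 R2 (proj1 HR) HU1 HM Hint (enorm x2) (enorm x1) z
       ltac:(lra) Hl Hgt1 ltac:(lra) (Hgpos x2 x1 Hx2 Hx1 Hl)). lra.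
Qed.
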